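(* Let $q:=\frac{y_0^2(1-\beta)^2}{\nu^2x_0^{2(1-\beta)}}$. (i) If $q>1$, or $q=1$ and $\frac23\le\beta<1$, then the sequence $(\mathbb{P}_\infty^{(n)})_{n\ge0}$ diverges. (ii) If $q<1$, or $q=1$ and $0\le\beta<\frac23$, then as $n\to\infty$, $$\mathbb{P}_\infty=\mathbb{P}_\infty^{(n)}+\mathcal{O}\!\left(n^{-1+\frac{\beta}{2-2\beta}}\exp\!\big(-n\log(1/q)\big)\right).$$
   Context: Parameters $x_0,y_0,\nu>0$, $\beta\in[0,1)$. $\Gamma(v,x):=\Gamma(v)^{-1}\int_0^xu^{v-1}e^{-u}\,\mathrm{d}u$. $\mathbb{P}_\infty:=\frac{y_0}{\nu\sqrt{2\pi}}\int_0^\infty\left[1-\Gamma\!\left(\frac{1}{2(1-\beta)},\frac{x_0^{2(1-\beta)}}{2r(1-\beta)^2}\right)\right]r^{-3/2}\exp\!\left(-\frac{y_0^2}{2\nu^2r}\right)\mathrm{d}r$ (the large-time mass at zero of the uncorrelated SABR model), and for $n\ge0$, $\mathbb{P}_\infty^{(n)}:=\int_0^\infty\left[1-\Gamma\!\left(\frac{1}{2(1-\beta)},\frac{x_0^{2(1-\beta)}}{2r(1-\beta)^2}\right)\right]\frac{y_0}{\nu r^{3/2}\sqrt{2\pi}}\sum_{k=0}^n\frac{1}{k!}\left(-\frac{y_0^2}{2\nu^2r}\right)^k\mathrm{d}r$, equivalently $\mathbb{P}_\infty^{(n)}=\sum_{k=0}^n(-1)^kb_k$ with $b_k:=\frac{2y_0(1-\beta)}{\Gamma(\frac{1}{2(1-\beta)})\nu\sqrt{\pi}x_0^{1-\beta}}q^k\frac{\Gamma(k+1+\frac{\beta}{2-2\beta})}{k!(1+2k)}$.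 *)

(* Defs.v *)
From Stdlib Require Import Reals Lra Arith ClassicalEpsilon.
From Stdlib Require Import Factorial.
Open Scope R_scope.

Definition is_int_0_inf (f : R -> R) (l : R) : Prop :=
  forall eps : R, 0 < eps ->
    exists delta M : R, 0 < delta /\
      forall s t : R, 0 < s < delta -> M < t ->
        exists pr : Riemann_integrable f s t, Rabs (RiemannInt pr - l) < eps.

Definition is_int_0_to (f : R -> R) (x l : R) : Prop :=
  forall eps : R, 0 < eps ->
    exists delta : R, 0 < delta /\
      forall s : R, 0 < s < delta ->
        exists pr : Riemann_integrable f s x, Rabs (RiemannInt pr - l) < eps.

(** Values of these integrals (chosen by Hilbert's epsilon; meaningful when
    the integral converges, which is the case for all uses below). *)
Definition Int_0_inf (f : R -> R) : R :=
  epsilon (inhabits 0) (fun l => is_int_0_inf f l).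
Definition Int_0_to (f : R -> R) (x : R) : R :=
  epsilon (inhabits 0) (fun l => is_int_0_to f x l).

Definition Gamma_fun (v : R) : R :=
  Int_0_inf (fun u => Rpower u (v - 1) * exp (- u)).

Definition inc_Gamma (v x : R) : R :=
  / Gamma_fun v * Int_0_to (fun u => Rpower u (v - 1) * exp (- u)) x.

Definition tail_factor (x0 beta r : R) : R :=
  1 - inc_Gamma (/ (2 * (1 - beta)))
        (Rpower x0 (2 * (1 - beta)) / (2 * r * (1 - beta) ^ 2)).

(** Large-time mass at zero P_∞ of the uncorrelated SABR model. *)
Definition P_inf (x0 y0 nu beta : R) : R :=
  y0 / (nu * sqrt (2 * PI)) *
  Int_0_inf (fun r => tail_factor x0 beta r * Rpower r (- (3 / 2))
                      * exp (- (y0 ^ 2 / (2 * nu ^ 2 * r)))).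

Definition P_inf_n (x0 y0 nu beta : R) (n : nat) : R :=
  Int_0_inf (fun r => tail_factor x0 beta r
    * (y0 / (nu * Rpower r (3 / 2) * sqrt (2 * PI)))
    * sum_f_R0 (fun k => / INR (fact k) * (- (y0 ^ 2 / (2 * nu ^ 2 * r))) ^ k) n).

Definition q_param (x0 y0 nu beta : R) : R :=
  y0 ^ 2 * (1 - beta) ^ 2 / (nu ^ 2 * Rpower x0 (2 * (1 - beta))).

(* Main.v *)
Require Import Defs.
From Stdlib Require Import Reals Lra Lia Factorial Classical.
From Coquelicot Require Import Coquelicot.
Open Scope R_scope.

Definition lim0 (F : R -> R) (l : R) := forall eps, 0 < eps ->
  exists d, 0 < d /\ forall s, 0 < s < d -> Rabs (F s - l) < eps.
Definition limI (F : R -> R) (l : R) := forall eps, 0 < eps ->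
  exists M, forall t, M < t -> Rabs (F t - l) < eps.

Lemma lim0_plus F G a b : lim0 F a -> lim0 G b -> lim0 (fun s => F s + G s) (a + b).
Proof.
  intros HF HG eps He. destruct (HF (eps/2)) as [d1 [Hd1 H1]]; [lra|].
  destruct (HG (eps/2)) as [d2 [Hd2 H2]]; [lra|].
  exists (Rmin d1 d2). split. apply Rmin_pos; lra.
  intros s Hs. assert (s < d1) by (eapply Rlt_le_trans; [apply Hs|apply Rmin_l]).
  assert (s < d2) by (eapply Rlt_le_trans; [apply Hs|apply Rmin_r]).
  specialize (H1 s ltac:(lra)). specialize (H2 s ltac:(lra)).
  apply Rabs_def2 in H1. apply Rabs_def2 in H2. apply Rabs_def1; lra.
Qed.

Lemma limI_plus F G a b : limI F a -> limI G b -> limI (fun s => F s + G s) (a + b).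
Proof.
  intros HF HG eps He. destruct (HF (eps/2)) as [d1 H1]; [lra|].
  destruct (HG (eps/2)) as [d2 H2]; [lra|].
  exists (Rmax d1 d2).
  intros s Hs. assert (d1 < s) by (eapply Rle_lt_trans; [apply Rmax_l|apply Hs]).
  assert (d2 < s) by (eapply Rle_lt_trans; [apply Rmax_r|apply Hs]).
  specialize (H1 s ltac:(lra)). specialize (H2 s ltac:(lra)).
  apply Rabs_def2 in H1. apply Rabs_def2 in H2. apply Rabs_def1; lra.
Qed.

Lemma lim0_const c : lim0 (fun _ => c) c.
Proof. intros eps He. exists 1. split; [lra|]. intros. rewrite Rminus_diag, Rabs_R0. lra. Qed.
Lemma limI_const c : limI (fun _ => c) c.
Proof. intros eps He. exists 0. intros. rewrite Rminus_diag, Rabs_R0. lra. Qed.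

Lemma lim0_scal F a c : lim0 F a -> lim0 (fun s => c * F s) (c * a).
Proof.
  intros HF eps He. destruct (HF (eps / (Rabs c + 1))) as [d [Hd H]].
  { apply Rdiv_lt_0_compat; [lra|]. pose proof (Rabs_pos c); lra. }
  exists d; split; auto. intros s Hs. specialize (H s Hs).
  replace (c * F s - c * a) with (c * (F s - a)) by ring. rewrite Rabs_mult.
  pose proof (Rabs_pos c). pose proof (Rabs_pos (F s - a)).
  apply Rle_lt_trans with ((Rabs c + 1) * Rabs (F s - a)). nra.
  replace eps with ((Rabs c + 1) * (eps / (Rabs c + 1))) by (field; lra).
  apply Rmult_lt_compat_l; lra.
Qed.

Lemma limI_scal F a c : limI F a -> limI (fun s => c * F s) (c * a).
Proof.
  intros HF eps He. destruct (HF (eps / (Rabs c + 1))) as [d H].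
  { apply Rdiv_lt_0_compat; [lra|]. pose proof (Rabs_pos c); lra. }
  exists d. intros s Hs. specialize (H s Hs).
  replace (c * F s - c * a) with (c * (F s - a)) by ring. rewrite Rabs_mult.
  pose proof (Rabs_pos c). pose proof (Rabs_pos (F s - a)).
  apply Rle_lt_trans with ((Rabs c + 1) * Rabs (F s - a)). nra.
  replace eps with ((Rabs c + 1) * (eps / (Rabs c + 1))) by (field; lra).
  apply Rmult_lt_compat_l; lra.
Qed.

Lemma lim0_ext F G a d0 : 0 < d0 -> (forall s, 0 < s < d0 -> F s = G s) -> lim0 F a -> lim0 G a.
Proof.
  intros Hd0 HE HF eps He. destruct (HF eps He) as [d [Hd H]].
  exists (Rmin d d0). split. apply Rmin_pos; lra.
  intros s Hs. assert (s < d) by (eapply Rlt_le_trans; [apply Hs|apply Rmin_l]).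
  assert (s < d0) by (eapply Rlt_le_trans; [apply Hs|apply Rmin_r]).
  rewrite <- HE by lra. apply H; lra.
Qed.

Lemma limI_ext F G a M0 : (forall s, M0 < s -> F s = G s) -> limI F a -> limI G a.
Proof.
  intros HE HF eps He. destruct (HF eps He) as [d H].
  exists (Rmax d M0).
  intros s Hs. assert (d < s) by (eapply Rle_lt_trans; [apply Rmax_l|apply Hs]).
  assert (M0 < s) by (eapply Rle_lt_trans; [apply Rmax_r|apply Hs]).
  rewrite <- HE by lra. apply H; lra.
Qed.

Lemma lim0_le F G a b d0 : 0 < d0 -> (forall s, 0 < s < d0 -> F s <= G s) -> lim0 F a -> lim0 G b -> a <= b.
Proof.
  intros Hd0 HE HF HG. apply Rnot_lt_le. intro Hab.
  destruct (HF ((a-b)/2)) as [d1 [Hd1 H1]]; [lra|].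
  destruct (HG ((a-b)/2)) as [d2 [Hd2 H2]]; [lra|].
  set (s := Rmin d0 (Rmin d1 d2) / 2).
  assert (Hm: 0 < Rmin d0 (Rmin d1 d2)) by (repeat apply Rmin_pos; lra).
  assert (s < d0) by (unfold s; pose proof (Rmin_l d0 (Rmin d1 d2)); lra).
  assert (s < d1) by (unfold s; pose proof (Rmin_r d0 (Rmin d1 d2)); pose proof (Rmin_l d1 d2); lra).
  assert (s < d2) by (unfold s; pose proof (Rmin_r d0 (Rmin d1 d2)); pose proof (Rmin_r d1 d2); lra).
  assert (0 < s) by (unfold s; lra).
  specialize (H1 s ltac:(lra)). specialize (H2 s ltac:(lra)). specialize (HE s ltac:(lra)).
  apply Rabs_def2 in H1. apply Rabs_def2 in H2. lra.
Qed.

Lemma limI_le F G a b M0 : (forall s, M0 < s -> F s <= G s) -> limI F a -> limI G b -> a <= b.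
Proof.
  intros HE HF HG. apply Rnot_lt_le. intro Hab.
  destruct (HF ((a-b)/2)) as [d1 H1]; [lra|].
  destruct (HG ((a-b)/2)) as [d2 H2]; [lra|].
  set (s := Rmax M0 (Rmax d1 d2) + 1).
  pose proof (Rmax_l M0 (Rmax d1 d2)). pose proof (Rmax_r M0 (Rmax d1 d2)).
  pose proof (Rmax_l d1 d2). pose proof (Rmax_r d1 d2).
  specialize (H1 s ltac:(unfold s; lra)). specialize (H2 s ltac:(unfold s; lra)). specialize (HE s ltac:(unfold s; lra)).
  apply Rabs_def2 in H1. apply Rabs_def2 in H2. lra.
Qed.

Lemma lim0_unique F a b : lim0 F a -> lim0 F b -> a = b.
Proof. intros. apply Rle_antisym; apply (lim0_le F F _ _ 1); auto; intros; lra. Qed.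

Lemma limI_unique F a b : limI F a -> limI F b -> a = b.
Proof. intros. apply Rle_antisym; apply (limI_le F F _ _ 0); auto; intros; lra. Qed.

Lemma lim0_squeeze F G H l d0 : 0 < d0 -> (forall s, 0 < s < d0 -> F s <= G s <= H s) ->
  lim0 F l -> lim0 H l -> lim0 G l.
Proof.
  intros Hd0 HE HF HH eps He. destruct (HF eps He) as [d1 [Hd1 H1]].
  destruct (HH eps He) as [d2 [Hd2 H2]].
  exists (Rmin d0 (Rmin d1 d2)). split. repeat apply Rmin_pos; lra.
  intros s Hs. pose proof (Rmin_l d0 (Rmin d1 d2)). pose proof (Rmin_r d0 (Rmin d1 d2)).
  pose proof (Rmin_l d1 d2). pose proof (Rmin_r d1 d2).
  specialize (H1 s ltac:(lra)). specialize (H2 s ltac:(lra)). specialize (HE s ltac:(lra)).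
  apply Rabs_def2 in H1. apply Rabs_def2 in H2. apply Rabs_def1; lra.
Qed.

Lemma limI_squeeze F G H l M0 : (forall s, M0 < s -> F s <= G s <= H s) ->
  limI F l -> limI H l -> limI G l.
Proof.
  intros HE HF HH eps He. destruct (HF eps He) as [d1 H1].
  destruct (HH eps He) as [d2 H2].
  exists (Rmax M0 (Rmax d1 d2)).
  intros s Hs. pose proof (Rmax_l M0 (Rmax d1 d2)). pose proof (Rmax_r M0 (Rmax d1 d2)).
  pose proof (Rmax_l d1 d2). pose proof (Rmax_r d1 d2).
  specialize (H1 s ltac:(lra)). specialize (H2 s ltac:(lra)). specialize (HE s ltac:(lra)).
  apply Rabs_def2 in H1. apply Rabs_def2 in H2. apply Rabs_def1; lra.
Qed.

Lemma lim0_of_limI F l X : 0 < X -> limI F l -> lim0 (fun r => F (X / r)) l.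
Proof.
  intros HX HF eps He. destruct (HF eps He) as [M H].
  exists (X / (Rabs M + 1)). split. apply Rdiv_lt_0_compat; [lra|]. pose proof (Rabs_pos M); lra.
  intros s [Hs1 Hs2]. apply H. pose proof (Rabs_pos M). pose proof (Rle_abs M).
  assert (s * (Rabs M + 1) < X).
  { apply (Rmult_lt_compat_r (Rabs M + 1)) in Hs2; [|lra].
    unfold Rdiv in Hs2. rewrite Rmult_assoc, Rinv_l in Hs2 by lra. lra. }
  apply Rlt_le_trans with (Rabs M + 1); [lra|].
  apply (Rmult_le_reg_r s); auto. unfold Rdiv. rewrite Rmult_assoc, Rinv_l by lra. lra.
Qed.

Lemma limI_of_lim0 F l X : 0 < X -> lim0 F l -> limI (fun r => F (X / r)) l.
Proof.
  intros HX HF eps He. destruct (HF eps He) as [d [Hd H]].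
  exists (X / d). intros t Ht. 
  assert (0 < t). { apply Rlt_trans with (X/d); auto. apply Rdiv_lt_0_compat; lra. }
  apply H. split. apply Rdiv_lt_0_compat; lra.
  apply (Rmult_lt_reg_r t); auto. unfold Rdiv. rewrite Rmult_assoc, Rinv_l by lra.
  apply (Rmult_lt_compat_l d) in Ht; auto. unfold Rdiv in Ht.
  replace (d * (X * / d)) with X in Ht by (field; lra). lra.
Qed.

Lemma lim0_mono F M : (forall s s', 0 < s <= s' -> s' <= 1 -> F s' <= F s) ->
  (forall s, 0 < s <= 1 -> F s <= M) -> exists l, lim0 F l.
Proof.
  intros Hm Hb.
  set (E := fun y => exists s, 0 < s <= 1 /\ y = F s).
  assert (HB : bound E). { exists M. intros y [s [Hs ->]]. apply Hb; auto. }
  assert (HE : exists y, E y). { exists (F 1). exists 1. split; [lra|auto]. }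
  destruct (completeness E HB HE) as [L [HL1 HL2]].
  exists L. intros eps He.
  assert (exists s0, 0 < s0 <= 1 /\ L - eps < F s0) as [s0 [Hs0 Hf0]].
  { apply Classical_Prop.NNPP. intro Hn. assert (L <= L - eps); [|lra].
    apply HL2. intros y [s [Hs ->]]. apply Rnot_lt_le. intro. apply Hn. exists s. auto. }
  exists s0. split; [lra|]. intros s Hs.
  assert (F s <= L) by (apply HL1; exists s; split; [lra|auto]).
  assert (F s0 <= F s) by (apply Hm; lra).
  apply Rabs_def1; lra.
Qed.

Lemma limI_mono F M : (forall t t', 1 <= t <= t' -> F t <= F t') ->
  (forall t, 1 <= t -> F t <= M) -> exists l, limI F l.
Proof.
  intros Hm Hb.
  set (E := fun y => exists t, 1 <= t /\ y = F t).
  assert (HB : bound E). { exists M. intros y [s [Hs ->]]. apply Hb; auto. }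
  assert (HE : exists y, E y). { exists (F 1). exists 1. split; [lra|auto]. }
  destruct (completeness E HB HE) as [L [HL1 HL2]].
  exists L. intros eps He.
  assert (exists s0, 1 <= s0 /\ L - eps < F s0) as [s0 [Hs0 Hf0]].
  { apply Classical_Prop.NNPP. intro Hn. assert (L <= L - eps); [|lra].
    apply HL2. intros y [s [Hs ->]]. apply Rnot_lt_le. intro. apply Hn. exists s. auto. }
  exists s0. intros s Hs.
  assert (F s <= L) by (apply HL1; exists s; split; [lra|auto]).
  assert (F s0 <= F s) by (apply Hm; lra).
  apply Rabs_def1; lra.
Qed.


Definition cont0 (f : R -> R) := forall x, 0 < x -> continuous f x.
Definition II (f : R -> R) (A B : R) :=
  cont0 f /\ lim0 (fun s => RInt f s 1) A /\ limI (fun t => RInt f 1 t) B.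

Lemma ex_RInt_c0 f a b : cont0 f -> 0 < a -> 0 < b -> ex_RInt f a b.
Proof.
  intros Hf Ha Hb. apply (@ex_RInt_continuous R_CompleteNormedModule). intros z Hz. apply Hf.
  destruct Hz as [Hz _]. eapply Rlt_le_trans; [|apply Hz].
  unfold Rmin; destruct Rle_dec; lra.
Qed.

Lemma RInt_split f a b : cont0 f -> 0 < a -> 0 < b -> RInt f a b = RInt f a 1 + RInt f 1 b.
Proof.
  intros Hf Ha Hb. symmetry. apply (RInt_Chasles f a 1 b); apply ex_RInt_c0; auto; lra.
Qed.

Lemma RInt_split' f a b c : cont0 f -> 0 < a -> 0 < b -> 0 < c -> RInt f a c = RInt f a b + RInt f b c.
Proof.
  intros Hf Ha Hb Hc. symmetry. apply (RInt_Chasles f a b c); apply ex_RInt_c0; auto; lra.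
Qed.


Lemma is_int_unique f l1 l2 : is_int_0_inf f l1 -> is_int_0_inf f l2 -> l1 = l2.
Proof.
  intros H1 H2. destruct (Req_dec l1 l2) as [|Hne]; auto. exfalso.
  set (e := Rabs (l1 - l2) / 2).
  assert (He : 0 < e) by (unfold e; apply Rdiv_lt_0_compat; [apply Rabs_pos_lt; lra|lra]).
  destruct (H1 e He) as [d1 [M1 [Hd1 K1]]]. destruct (H2 e He) as [d2 [M2 [Hd2 K2]]].
  set (s := Rmin d1 d2 / 2). set (t := Rmax M1 M2 + 1).
  assert (0 < Rmin d1 d2) by (apply Rmin_pos; lra).
  pose proof (Rmin_l d1 d2). pose proof (Rmin_r d1 d2). pose proof (Rmax_l M1 M2). pose proof (Rmax_r M1 M2).
  destruct (K1 s t) as [p1 Q1]; [unfold s; lra|unfold t; lra|].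
  destruct (K2 s t) as [p2 Q2]; [unfold s; lra|unfold t; lra|].
  rewrite (RiemannInt_P5 p1 p2) in Q1.
  assert (Hfin : Rabs (l1 - l2) < 2 * e).
  { replace (l1 - l2) with (-(RiemannInt p2 - l1) + (RiemannInt p2 - l2)) by ring.
    eapply Rle_lt_trans; [apply Rabs_triang|]. rewrite Rabs_Ropp. lra. }
  unfold e in Hfin. lra.
Qed.

Lemma is_int_to_unique f x l1 l2 : is_int_0_to f x l1 -> is_int_0_to f x l2 -> l1 = l2.
Proof.
  intros H1 H2. destruct (Req_dec l1 l2) as [|Hne]; auto. exfalso.
  set (e := Rabs (l1 - l2) / 2).
  assert (He : 0 < e) by (unfold e; apply Rdiv_lt_0_compat; [apply Rabs_pos_lt; lra|lra]).
  destruct (H1 e He) as [d1 [Hd1 K1]]. destruct (H2 e He) as [d2 [Hd2 K2]].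
  set (s := Rmin d1 d2 / 2).
  assert (0 < Rmin d1 d2) by (apply Rmin_pos; lra).
  pose proof (Rmin_l d1 d2). pose proof (Rmin_r d1 d2).
  destruct (K1 s) as [p1 Q1]; [unfold s; lra|].
  destruct (K2 s) as [p2 Q2]; [unfold s; lra|].
  rewrite (RiemannInt_P5 p1 p2) in Q1.
  assert (Hfin : Rabs (l1 - l2) < 2 * e).
  { replace (l1 - l2) with (-(RiemannInt p2 - l1) + (RiemannInt p2 - l2)) by ring.
    eapply Rle_lt_trans; [apply Rabs_triang|]. rewrite Rabs_Ropp. lra. }
  unfold e in Hfin. lra.
Qed.

Lemma II_is f A B : II f A B -> is_int_0_inf f (A + B).
Proof.
  intros [Hc [HA HB]] eps He.
  destruct (HA (eps/2)) as [d [Hd H1]]; [lra|]. destruct (HB (eps/2)) as [M H2]; [lra|].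
  exists (Rmin d 1), (Rmax M 1). split. apply Rmin_pos; lra.
  intros s t Hs Ht. pose proof (Rmin_l d 1). pose proof (Rmin_r d 1). pose proof (Rmax_l M 1). pose proof (Rmax_r M 1).
  assert (Hex : ex_RInt f s t) by (apply ex_RInt_c0; auto; lra).
  exists (ex_RInt_Reals_0 _ _ _ Hex). rewrite <- RInt_Reals.
  rewrite RInt_split by (auto; lra).
  specialize (H1 s ltac:(lra)). specialize (H2 t ltac:(lra)).
  apply Rabs_def2 in H1. apply Rabs_def2 in H2. apply Rabs_def1; lra.
Qed.

Lemma II_Int f A B : II f A B -> Int_0_inf f = A + B.
Proof.
  intro H. pose proof (II_is f A B H) as Hi. unfold Int_0_inf.
  apply (is_int_unique f). apply ClassicalEpsilon.epsilon_spec. exists (A+B); auto. auto.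
Qed.

Lemma II_to f A B x : II f A B -> 0 < x -> Int_0_to f x = A + RInt f 1 x.
Proof.
  intros [Hc [HA HB]] Hx.
  assert (Hi : is_int_0_to f x (A + RInt f 1 x)).
  { intros eps He. destruct (HA eps He) as [d [Hd H1]].
    exists (Rmin d 1). split. apply Rmin_pos; lra.
    intros s Hs. pose proof (Rmin_l d 1). pose proof (Rmin_r d 1).
    assert (Hex : ex_RInt f s x) by (apply ex_RInt_c0; auto; lra).
    exists (ex_RInt_Reals_0 _ _ _ Hex). rewrite <- RInt_Reals.
    rewrite RInt_split by (auto; lra).
    replace (RInt f s 1 + RInt f 1 x - (A + RInt f 1 x)) with (RInt f s 1 - A) by ring.
    apply H1; lra. }
  unfold Int_0_to. apply (is_int_to_unique f x). apply ClassicalEpsilon.epsilon_spec. exists (A + RInt f 1 x); auto. auto.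
Qed.

Lemma cont0_ext f g : (forall x, 0 < x -> f x = g x) -> cont0 f -> cont0 g.
Proof.
  intros He Hf x Hx. apply (continuous_ext_loc _ f). 
  exists (mkposreal x Hx). intros y Hy. apply He.
  unfold ball in Hy; simpl in Hy; unfold AbsRing_ball, abs, minus, plus, opp in Hy; simpl in Hy.
  apply Rabs_def2 in Hy. simpl in Hy. lra. apply Hf; auto.
Qed.

Lemma RInt_ext0 (f g : R -> R) a b : (forall x, 0 < x -> f x = g x) -> 0 < a -> 0 < b -> RInt f a b = RInt g a b.
Proof.
  intros He Ha Hb. apply RInt_ext. intros x [Hx _]. apply He. eapply Rle_lt_trans; [|apply Hx].
  unfold Rmin; destruct Rle_dec; lra.
Qed.

Lemma II_ext f g A B : (forall x, 0 < x -> f x = g x) -> II f A B -> II g A B.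
Proof.
  intros He [Hc [HA HB]]. split; [|split].
  - eapply cont0_ext; eauto.
  - apply (lim0_ext (fun s => RInt f s 1) _ _ 1); [lra| |auto]. intros s Hs. apply RInt_ext0; auto; lra.
  - apply (limI_ext (fun s => RInt f 1 s) _ _ 1); [|auto]. intros s Hs. apply RInt_ext0; auto; lra.
Qed.

Lemma II_plus f g A B C D : II f A B -> II g C D -> II (fun x => f x + g x) (A + C) (B + D).
Proof.
  intros [Hc [HA HB]] [Hc' [HC HD]]. split; [|split].
  - intros x Hx. apply (continuous_plus f g); auto.
  - apply (lim0_ext (fun s => RInt f s 1 + RInt g s 1) _ _ 1); [lra| |apply lim0_plus; auto].
    intros s Hs. symmetry. apply (RInt_plus f g); apply ex_RInt_c0; auto; lra.
  - apply (limI_ext (fun s => RInt f 1 s + RInt g 1 s) _ _ 1); [|apply limI_plus; auto].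
    intros s Hs. symmetry. apply (RInt_plus f g); apply ex_RInt_c0; auto; lra.
Qed.

Lemma II_scal f A B c : II f A B -> II (fun x => c * f x) (c * A) (c * B).
Proof.
  intros [Hc [HA HB]]. split; [|split].
  - intros x Hx. apply (continuous_mult (fun _ => c) f); auto. apply continuous_const.
  - apply (lim0_ext (fun s => c * RInt f s 1) _ _ 1); [lra| |apply lim0_scal; auto].
    intros s Hs. symmetry. apply (RInt_scal f); apply ex_RInt_c0; auto; lra.
  - apply (limI_ext (fun s => c * RInt f 1 s) _ _ 1); [|apply limI_scal; auto].
    intros s Hs. symmetry. apply (RInt_scal f); apply ex_RInt_c0; auto; lra.
Qed.

Lemma II_zero : II (fun _ => 0) 0 0.
Proof.
  split; [|split].
  - intros x _. apply continuous_const.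
  - apply (lim0_ext (fun _ => 0) _ _ 1); [lra| |apply lim0_const].
    intros s _. rewrite RInt_const. unfold scal; simpl; unfold mult; simpl; ring.
  - apply (limI_ext (fun _ => 0) _ _ 1); [|apply limI_const].
    intros s _. rewrite RInt_const. unfold scal; simpl; unfold mult; simpl; ring.
Qed.

Lemma II_le f g A B C D : (forall x, 0 < x -> f x <= g x) -> II f A B -> II g C D -> A <= C /\ B <= D.
Proof.
  intros Hle [Hc [HA HB]] [Hc' [HC HD]]. split.
  - apply (lim0_le _ _ _ _ 1 ltac:(lra)) with (2 := HA) (3 := HC). intros s Hs.
    apply RInt_le; try lra; try (apply ex_RInt_c0; auto; lra). intros; apply Hle; lra.
  - apply (limI_le _ _ _ _ 1) with (2 := HB) (3 := HD). intros s Hs.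
    apply RInt_le; try lra; try (apply ex_RInt_c0; auto; lra). intros; apply Hle; lra.
Qed.

Lemma II_nonneg_bounds f A B : (forall x, 0 < x -> 0 <= f x) -> II f A B ->
  (forall s, 0 < s <= 1 -> 0 <= RInt f s 1 <= A) /\ (forall t, 1 <= t -> 0 <= RInt f 1 t <= B).
Proof.
  intros Hp [Hc [HA HB]].
  assert (Hpos : forall a b, 0 < a <= b -> 0 <= RInt f a b).
  { intros a b Hab. apply RInt_ge_0; try lra. apply ex_RInt_c0; auto; lra. intros; apply Hp; lra. }
  split.
  - intros s Hs. split. apply Hpos; lra.
    apply (lim0_le (fun _ => RInt f s 1) (fun s0 => RInt f s0 1) _ _ s); try lra; [|apply lim0_const|auto].
    intros s' Hs'. rewrite (RInt_split' f s' s 1) by (auto; lra). pose proof (Hpos s' s ltac:(lra)). lra.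
  - intros t Ht. split. apply Hpos; lra.
    apply (limI_le (fun _ => RInt f 1 t) (fun s0 => RInt f 1 s0) _ _ t); [|apply limI_const|auto].
    intros s' Hs'. rewrite (RInt_split' f 1 t s') by (auto; lra). pose proof (Hpos t s' ltac:(lra)). lra.
Qed.

Lemma II_exists f M : cont0 f -> (forall x, 0 < x -> 0 <= f x) ->
  (forall s, 0 < s <= 1 -> RInt f s 1 <= M) -> (forall t, 1 <= t -> RInt f 1 t <= M) ->
  exists A B, II f A B.
Proof.
  intros Hc Hp H1 H2.
  assert (Hpos : forall a b, 0 < a <= b -> 0 <= RInt f a b).
  { intros a b Hab. apply RInt_ge_0; try lra. apply ex_RInt_c0; auto; lra. intros; apply Hp; lra. }
  destruct (lim0_mono (fun s => RInt f s 1) M) as [A HA]; auto.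
  { intros s s' Hs Hs'. rewrite (RInt_split' f s s' 1) by (auto; lra). pose proof (Hpos s s' ltac:(lra)). lra. }
  destruct (limI_mono (fun s => RInt f 1 s) M) as [B HB]; auto.
  { intros s s' Hs. rewrite (RInt_split' f 1 s s') by (auto; lra). pose proof (Hpos s s' ltac:(lra)). lra. }
  exists A, B. split; auto.
Qed.

Lemma II_deriv f F F0 Finf : cont0 f -> (forall x, 0 < x -> is_derive F x (f x)) ->
  lim0 F F0 -> limI F Finf -> II f (F 1 - F0) (Finf - F 1).
Proof.
  intros Hc Hd H0 HI.
  assert (HR : forall a b, 0 < a -> 0 < b -> RInt f a b = F b - F a).
  { intros a b Ha Hb. apply is_RInt_unique.
    assert (Hm : 0 < Rmin a b) by (unfold Rmin; destruct Rle_dec; lra).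
    apply (is_RInt_derive F f); intros x Hx; [apply Hd|apply Hc]; lra. }
  split; [auto|split].
  - apply (lim0_ext (fun s => F 1 + (-1) * F s) _ _ 1); [lra| |].
    intros s Hs. rewrite HR by lra. ring.
    replace (F 1 - F0) with (F 1 + (-1) * F0) by ring. apply lim0_plus. apply lim0_const. apply lim0_scal; auto.
  - apply (limI_ext (fun s => F s + (-1) * F 1) _ _ 1); [|].
    intros s Hs. rewrite HR by lra. ring.
    replace (Finf - F 1) with (Finf + (-1) * F 1) by ring. apply limI_plus; auto. apply limI_const.
Qed.

Lemma exd_cont (f : R -> R) x : ex_derive f x -> continuous f x.
Proof. apply (@ex_derive_continuous R_AbsRing R_NormedModule). Qed.

Lemma lim0_cont F : continuous F 0 -> lim0 F (F 0).
Proof.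
  intro Hc. apply continuity_pt_filterlim in Hc.
  intros eps He. destruct (Hc eps He) as [d [Hd H]].
  exists d. split; auto. intros s Hs. apply (H s). split. split; [exact I|lra].
  unfold dist; simpl; unfold R_dist. rewrite Rminus_0_r, Rabs_right; lra.
Qed.

Lemma limI_inv c : limI (fun t => c / t) 0.
Proof.
  intros eps He. exists ((Rabs c + 1) / eps). intros t Ht.
  assert (Hq : 0 < (Rabs c + 1) / eps) by (apply Rdiv_lt_0_compat; [pose proof (Rabs_pos c)|]; lra).
  assert (0 < t) by lra.
  rewrite Rminus_0_r. unfold Rdiv. rewrite Rabs_mult, Rabs_inv, (Rabs_right t) by lra.
  apply (Rmult_lt_reg_r t); auto. rewrite Rmult_assoc, Rinv_l, Rmult_1_r by lra.
  apply Rlt_le_trans with (Rabs c + 1); [lra|].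
  apply (Rmult_lt_compat_l eps) in Ht; auto. unfold Rdiv in Ht.
  replace (eps * ((Rabs c + 1) * / eps)) with (Rabs c + 1) in Ht by (field; lra). lra.
Qed.

Lemma is_derive_Rpower x y : 0 < x -> is_derive (fun u => Rpower u y) x (y * Rpower x (y - 1)).
Proof. intro. apply is_derive_Reals. apply derivable_pt_lim_power; auto. Qed.

Lemma cont_Rpower x y : 0 < x -> continuous (fun u => Rpower u y) x.
Proof. intro. apply exd_cont. eexists. apply is_derive_Rpower; auto. Qed.

Lemma Rpower_pos x y : 0 < Rpower x y.
Proof. unfold Rpower. apply exp_pos. Qed.

Definition gam (p : R) := fun u => Rpower u (p - 1) * exp (- u).

Lemma cont_expm x : continuous (fun u => exp (- u)) x.
Proof. apply exd_cont. auto_derive. auto. Qed.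

Lemma cont0_gam p : cont0 (gam p).
Proof.
  intros x Hx. unfold gam. apply (continuous_mult (fun u => Rpower u (p-1)) (fun u => exp (-u))).
  apply cont_Rpower; auto. apply cont_expm.
Qed.

Lemma gam_pos p x : 0 < x -> 0 < gam p x.
Proof. intros. unfold gam. apply Rmult_lt_0_compat. apply Rpower_pos. apply exp_pos. Qed.

Lemma pow_le_fact_exp N x : 0 <= x -> x ^ N <= INR (fact N) * exp x.
Proof.
  revert x. induction N as [|N IH]; intros x Hx.
  - simpl. pose proof (exp_ineq1_le x). lra.
  - assert (E1 : RInt (fun t => INR (S N) * t ^ N) 0 x = x ^ S N).
    { apply is_RInt_unique.
      replace (x ^ S N) with (minus (x ^ S N) (0 ^ S N)) by (unfold minus, plus, opp; simpl; ring).
      apply (is_RInt_derive (fun t => t ^ S N)).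
      - intros t _. auto_derive; auto. change (match N with 0%nat => 1 | S _ => INR N + 1 end) with (INR (S N)). ring.
      - intros t _. apply exd_cont. auto_derive. auto. }
    assert (E2 : RInt (fun t => INR (S N) * (INR (fact N) * exp t)) 0 x = INR (fact (S N)) * (exp x - 1)).
    { apply is_RInt_unique.
      replace (INR (fact (S N)) * (exp x - 1)) with
        (minus (INR (fact (S N)) * exp x) (INR (fact (S N)) * exp 0)) by (unfold minus, plus, opp; simpl; rewrite exp_0; ring).
      apply (is_RInt_derive (fun t => INR (fact (S N)) * exp t)).
      - intros t _. auto_derive; auto. rewrite plus_INR, mult_INR, S_INR. ring.
      - intros t _. apply exd_cont. auto_derive. auto. }
    rewrite <- E1.
    apply Rle_trans with (INR (fact (S N)) * (exp x - 1)).
    + rewrite <- E2. apply RInt_le; auto.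
      * apply (@ex_RInt_continuous R_CompleteNormedModule). intros. apply exd_cont. auto_derive. auto.
      * apply (@ex_RInt_continuous R_CompleteNormedModule). intros. apply exd_cont. auto_derive. auto.
      * intros t Ht. apply Rmult_le_compat_l. apply pos_INR. apply IH. lra.
    + pose proof (pos_INR (fact (S N))). nra.
Qed.

Lemma exp_neg_le1 u : 0 <= u -> exp (- u) <= 1.
Proof. intro. rewrite <- exp_0. destruct H as [H|H]. left. apply exp_increasing. lra. rewrite <- H. right. f_equal. lra. Qed.

Lemma exp_pm1 p x : 0 < x -> exp ((p - 1) * ln x) = exp (p * ln x) / x.
Proof. intro. replace ((p-1)*ln x) with (p*ln x + - ln x) by ring. rewrite exp_plus, exp_Ropp, exp_ln by auto. reflexivity. Qed.

Lemma Rpower_1l p : Rpower 1 p = 1.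
Proof. unfold Rpower. rewrite ln_1, Rmult_0_r. apply exp_0. Qed.

Lemma RInt_Rpower_01 p s : 0 < p -> 0 < s <= 1 -> RInt (fun u => Rpower u (p - 1)) s 1 <= / p.
Proof.
  intros Hp Hs.
  assert (E : RInt (fun u => Rpower u (p - 1)) s 1 = / p * Rpower 1 p - / p * Rpower s p).
  { apply is_RInt_unique.
    replace (/ p * Rpower 1 p - / p * Rpower s p) with (minus (/ p * Rpower 1 p) (/ p * Rpower s p)) by reflexivity.
    apply (is_RInt_derive (fun u => / p * Rpower u p)).
    - intros x Hx. assert (0 < x) by (unfold Rmin in Hx; destruct Rle_dec; lra).
      unfold Rpower. auto_derive; auto. rewrite exp_pm1 by auto. field. lra.
    - intros x Hx. assert (0 < x) by (unfold Rmin in Hx; destruct Rle_dec; lra). apply cont_Rpower; auto. }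
  rewrite E. rewrite Rpower_1l. pose proof (Rpower_pos s p).
  assert (0 < / p) by (apply Rinv_0_lt_compat; auto). nra.
Qed.

Lemma exp_half_RInt K t : 1 <= t -> RInt (fun u => K * exp (- (u / 2))) 1 t = 2 * K * (exp (- (1/2)) - exp (- (t / 2))).
Proof.
  intros Ht. apply is_RInt_unique.
  replace (2 * K * (exp (- (1/2)) - exp (- (t / 2)))) with (minus (-(2 * K) * exp (- (t/2))) (-(2 * K) * exp (- (1/2)))) by (unfold minus, plus, opp; simpl; ring).
  apply (is_RInt_derive (fun u => -(2 * K) * exp (- (u / 2)))).
  - intros x _. auto_derive; auto. replace (- (x * / 2)) with (- (x / 2)) by (unfold Rdiv; ring). field.
  - intros x _. apply exd_cont. auto_derive. auto.
Qed.

Lemma exists_nat_ge r : exists N : nat, r <= INR N.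
Proof. destruct (INR_archimed 1 r) as [N HN]; [lra|]. exists N. lra. Qed.

Lemma gam_II p : 0 < p -> exists A B, II (gam p) A B.
Proof.
  intros Hp. destruct (exists_nat_ge (p - 1)) as [N HN].
  set (K := 2 ^ N * INR (fact N)).
  assert (HK : 0 < K) by (unfold K; apply Rmult_lt_0_compat; [apply pow_lt; lra| apply lt_0_INR, lt_O_fact]).
  apply (II_exists _ (/ p + 2 * K)).
  - apply cont0_gam.
  - intros. left. apply gam_pos; auto.
  - intros s Hs. apply Rle_trans with (/ p).
    + apply Rle_trans with (RInt (fun u => Rpower u (p - 1)) s 1); [|apply RInt_Rpower_01; auto].
      apply RInt_le; try lra. apply ex_RInt_c0; try lra. apply cont0_gam.
      apply (@ex_RInt_continuous R_CompleteNormedModule). intros z Hz. apply cont_Rpower.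
      unfold Rmin in Hz; destruct Rle_dec; lra.
      intros x Hx. unfold gam. pose proof (Rpower_pos x (p-1)). pose proof (exp_neg_le1 x ltac:(lra)). pose proof (exp_pos (-x)). nra.
    + lra.
  - intros t Ht. apply Rle_trans with (2 * K).
    + apply Rle_trans with (RInt (fun u => K * exp (- (u / 2))) 1 t).
      * apply RInt_le; try lra. apply ex_RInt_c0; try lra. apply cont0_gam.
        apply (@ex_RInt_continuous R_CompleteNormedModule). intros z Hz. apply exd_cont. auto_derive. auto.
        intros x Hx. unfold gam.
        assert (H1 : Rpower x (p - 1) <= x ^ N).
        { rewrite <- Rpower_pow by lra. apply Rle_Rpower; lra. }
        assert (H2 : x ^ N <= K * exp (x / 2)).
        { replace (x ^ N) with (2 ^ N * (x / 2) ^ N) by (rewrite <- Rpow_mult_distr; f_equal; field).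
          unfold K. rewrite Rmult_assoc. apply Rmult_le_compat_l. apply pow_le; lra.
          apply pow_le_fact_exp. lra. }
        replace (K * exp (- (x / 2))) with (K * exp (x / 2) * exp (- x)).
        2:{ rewrite Rmult_assoc, <- exp_plus. f_equal. f_equal. field. }
        apply Rmult_le_compat_r. left; apply exp_pos. lra.
      * rewrite exp_half_RInt by lra. pose proof (exp_pos (- (t/2))). pose proof (exp_neg_le1 (1/2) ltac:(lra)). nra.
    + pose proof (Rinv_0_lt_compat p Hp). lra.
Qed.

Lemma Gamma_II p A B : II (gam p) A B -> Gamma_fun p = A + B.
Proof. intro H. unfold Gamma_fun. apply II_Int. exact H. Qed.

Lemma Gamma_pos p : 0 < p -> 0 < Gamma_fun p.
Proof.
  intros Hp. destruct (gam_II p Hp) as [A [B H]]. rewrite (Gamma_II p A B H).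
  destruct (II_nonneg_bounds (gam p) A B) as [H1 H2]; auto.
  intros; left; apply gam_pos; auto.
  destruct (H1 (1/2) ltac:(lra)) as [_ Ha]. destruct (H2 1 ltac:(lra)) as [Hb Hb2].
  assert (0 < RInt (gam p) (1/2) 1).
  { apply RInt_gt_0; try lra. intros; apply gam_pos; lra. intros; apply cont0_gam; lra. }
  lra.
Qed.

Definition fn (n : nat) := fun u => u ^ n * exp (- u).

Lemma cont0_fn n : cont0 (fn n).
Proof. intros x _. apply exd_cont. unfold fn. auto_derive. auto. Qed.

Lemma fn_bound n u : 0 < u -> 0 <= fn n u <= INR (fact (S n)) / u.
Proof.
  intro Hu. unfold fn. split. apply Rmult_le_pos. apply pow_le; lra. left; apply exp_pos.
  pose proof (pow_le_fact_exp (S n) u ltac:(lra)). rewrite exp_Ropp.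
  simpl in H. apply (Rmult_le_reg_r (exp u * u)). apply Rmult_lt_0_compat; auto. apply exp_pos.
  replace (u ^ n * / exp u * (exp u * u)) with (u * u ^ n) by (field; apply Rgt_not_eq, exp_pos).
  replace (INR (fact (S n)) / u * (exp u * u)) with (INR (fact (S n)) * exp u) by (field; lra). auto.
Qed.

Lemma fn_II n : exists A B, II (fn n) A B /\ A + B = INR (fact n).
Proof.
  induction n as [|n [A [B [HI HS]]]].
  - set (F := fun u => - exp (- u)).
    assert (H := II_deriv (fn 0) F (F 0) 0 (cont0_fn 0)).
    edestruct H as [Hc [HA HB]].
    + intros x _. unfold F, fn. auto_derive; auto. ring.
    + apply lim0_cont. apply exd_cont. unfold F. auto_derive. auto.
    + apply (limI_squeeze (fun t => -1 / t) _ (fun _ => 0) _ 0).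
      * intros t Ht. unfold F. pose proof (fn_bound 0 t Ht). unfold fn in H0. simpl in H0.
        rewrite Rmult_1_l in H0. split; [|lra]. replace (-1 / t) with (- (1 / t)) by (field; lra). lra.
      * assert (Hl := limI_scal _ _ (-(1)) (limI_inv 1)). rewrite Rmult_0_r in Hl.
        apply (limI_ext (fun s => - (1) * (1 / s)) _ _ 0); [|exact Hl]. intros; simpl; unfold Rdiv; ring.
      * apply limI_const.
    + exists (F 1 - F 0), (0 - F 1). split. split; auto. unfold F. rewrite Ropp_0, exp_0. simpl. ring.
  - set (F := fun u => - (u ^ S n * exp (- u))).
    set (Fd := fun u => u ^ S n * exp (- u) - INR (S n) * (u ^ n * exp (- u))).
    assert (Hc : cont0 Fd). { intros x _. apply exd_cont. unfold Fd. auto_derive. auto. }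
    edestruct (II_deriv Fd F (F 0) 0 Hc) as [Hc' [HA' HB']].
    + intros x _. unfold F, Fd. auto_derive; auto. 
      change (match n with 0%nat => 1 | S _ => INR n + 1 end) with (INR (S n)). simpl pow. ring.
    + apply lim0_cont. apply exd_cont. unfold F. auto_derive. auto.
    + apply (limI_squeeze (fun t => - INR (fact (S (S n))) / t) _ (fun _ => 0) _ 0).
      * intros t Ht. unfold F. pose proof (fn_bound (S n) t Ht). unfold fn in H.
        split; [|lra]. replace (- INR (fact (S (S n))) / t) with (- (INR (fact (S (S n))) / t)) by (field; lra). lra.
      * apply limI_inv.
      * apply limI_const.
    + pose proof (II_plus _ _ _ _ _ _ (conj Hc' (conj HA' HB')) (II_scal _ _ _ (INR (S n)) HI)) as HH.
      exists (F 1 - F 0 + INR (S n) * A), (0 - F 1 + INR (S n) * B). split.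
      * eapply II_ext; [|exact HH]. intros x _. unfold Fd, fn. ring.
      * replace (F 1 - F 0 + INR (S n) * A + (0 - F 1 + INR (S n) * B)) with (INR (S n) * (A + B) - F 0) by ring.
        rewrite HS. replace (F 0) with 0 by (unfold F; simpl; ring). rewrite fact_simpl, mult_INR. ring.
Qed.

Lemma Gamma_nat n : Gamma_fun (INR n + 1) = INR (fact n).
Proof.
  destruct (fn_II n) as [A [B [H HS]]]. rewrite <- HS. apply Gamma_II.
  eapply II_ext; [|exact H]. intros x Hx. unfold fn, gam. f_equal.
  replace (INR n + 1 - 1) with (INR n) by ring. rewrite Rpower_pow; auto.
Qed.

Lemma gam_nat_II n : exists A B, II (gam (INR n + 1)) A B /\ A + B = INR (fact n).
Proof.
  destruct (fn_II n) as [A [B [H HS]]]. exists A, B. split; auto.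
  eapply II_ext; [|exact H]. intros x Hx. unfold fn, gam. f_equal.
  replace (INR n + 1 - 1) with (INR n) by ring. rewrite Rpower_pow; auto.
Qed.

Lemma Rpower_split_bound u N a J : 0 < u -> 0 < N -> 0 <= a <= INR J ->
  Rpower u a <= Rpower N a * (1 + (u / N) ^ J).
Proof.
  intros Hu HN Ha. assert (0 < u / N) by (apply Rdiv_lt_0_compat; auto).
  pose proof (pow_le (u/N) J ltac:(lra)). pose proof (Rpower_pos N a).
  destruct (Rle_dec u N) as [Hle|Hle].
  - apply Rle_trans with (Rpower N a). apply Rle_Rpower_l; lra. nra.
  - assert (E : Rpower u a = Rpower N a * Rpower (u / N) a).
    { rewrite Rpower_mult_distr by auto. f_equal. field. lra. }
    rewrite E. apply Rmult_le_compat_l; [lra|].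
    assert (1 <= u / N). { apply (Rmult_le_reg_r N); auto. unfold Rdiv. rewrite Rmult_assoc, Rinv_l; lra. }
    apply Rle_trans with ((u / N) ^ J). rewrite <- Rpower_pow by auto. apply Rle_Rpower; lra. lra.
Qed.

Lemma fact_plus_le n J : (J <= n)%nat -> (fact (n + J) <= fact n * (2 * n) ^ J)%nat.
Proof.
  induction J as [|J IH]; intros HJ.
  - rewrite Nat.add_0_r. simpl. lia.
  - replace (n + S J)%nat with (S (n + J)) by lia. rewrite fact_simpl, Nat.pow_succ_r'.
    specialize (IH ltac:(lia)). 
    apply Nat.le_trans with (S (n + J) * (fact n * (2 * n) ^ J))%nat. apply Nat.mul_le_mono_l; auto.
    replace (fact n * (2 * n * (2 * n) ^ J))%nat with ((2 * n) * (fact n * (2 * n) ^ J))%nat by ring.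
    apply Nat.mul_le_mono_r. lia.
Qed.

Lemma Gamma_upper n a J : (1 <= n)%nat -> (J <= n)%nat -> 0 <= a <= INR J ->
  Gamma_fun (INR n + 1 + a) <= Rpower (INR n) a * INR (fact n) * (1 + 2 ^ J).
Proof.
  intros Hn HJ Ha.
  assert (HN : 0 < INR n) by (apply lt_0_INR; lia).
  destruct (gam_II (INR n + 1 + a)) as [A [B H1]]. pose proof (pos_INR n); lra.
  destruct (gam_nat_II n) as [A2 [B2 [H2 S2]]].
  destruct (gam_nat_II (n + J)) as [A3 [B3 [H3 S3]]].
  set (c := / INR n ^ J).
  pose proof (II_scal _ _ _ (Rpower (INR n) a) (II_plus _ _ _ _ _ _ H2 (II_scal _ _ _ c H3))) as H4.
  match type of H4 with II ?g _ _ => assert (PW : forall u, 0 < u -> gam (INR n + 1 + a) u <= g u) end.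
  - intros u Hu. cbv beta. unfold gam.
    replace (INR n + 1 + a - 1) with (INR n + a) by ring.
    replace (INR n + 1 - 1) with (INR n) by ring.
    replace (INR (n + J) + 1 - 1) with (INR (n + J)) by ring.
    rewrite Rpower_plus, !Rpower_pow by lra. rewrite pow_add.
    pose proof (Rpower_split_bound u (INR n) a J Hu HN Ha).
    assert (E : (u / INR n) ^ J = u ^ J * c) by (unfold c, Rdiv; rewrite Rpow_mult_distr, pow_inv; reflexivity).
    rewrite E in H.
    pose proof (pow_lt u n Hu). pose proof (exp_pos (-u)).
    replace (Rpower (INR n) a * (u ^ n * exp (- u) + c * (u ^ n * u ^ J * exp (- u))))
      with (u ^ n * exp (- u) * (Rpower (INR n) a * (1 + u ^ J * c))) by ring.
    replace (u ^ n * Rpower u a * exp (- u)) with (u ^ n * exp (- u) * Rpower u a) by ring.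
    apply Rmult_le_compat_l; auto. nra.
  - destruct (II_le _ _ _ _ _ _ PW H1 H4) as [L1 L2].
    rewrite (Gamma_II _ _ _ H1).
    apply Rle_trans with (Rpower (INR n) a * (A2 + c * A3) + Rpower (INR n) a * (B2 + c * B3)). lra.
    replace (Rpower (INR n) a * (A2 + c * A3) + Rpower (INR n) a * (B2 + c * B3))
      with (Rpower (INR n) a * ((A2 + B2) + c * (A3 + B3))) by ring.
    rewrite S2, S3. rewrite Rmult_assoc. apply Rmult_le_compat_l. left; apply Rpower_pos.
    pose proof (fact_plus_le n J HJ) as Hf. apply le_INR in Hf. rewrite mult_INR, pow_INR, mult_INR in Hf.
    simpl (INR 2) in Hf.
    assert (c * INR (fact (n + J)) <= INR (fact n) * 2 ^ J).
    { unfold c. apply (Rmult_le_reg_l (INR n ^ J)). apply pow_lt; auto.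
      rewrite <- Rmult_assoc, Rinv_r, Rmult_1_l by (apply pow_nonzero; lra).
      rewrite Rpow_mult_distr in Hf. replace (1+1) with 2 in Hf by ring. lra. }
    lra.
Qed.

Lemma Gamma_lower n a b : 0 <= INR b <= a ->
  INR (fact (n + b)) <= Gamma_fun (INR n + 1 + a) + 1.
Proof.
  intros Hab.
  destruct (gam_II (INR n + 1 + a)) as [A [B H1]]. pose proof (pos_INR n); lra.
  destruct (gam_nat_II (n + b)) as [A2 [B2 [H2 S2]]].
  destruct (fn_II 0) as [A3 [B3 [H3 S3]]].
  pose proof (II_plus _ _ _ _ _ _ H1 H3) as H4.
  match type of H4 with II ?g _ _ => assert (PW : forall u, 0 < u -> gam (INR (n + b) + 1) u <= g u) end.
  - intros u Hu. cbv beta. unfold gam, fn.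
    replace (INR n + 1 + a - 1) with (INR n + a) by ring.
    replace (INR (n + b) + 1 - 1) with (INR (n + b)) by ring.
    pose proof (exp_pos (-u)). simpl pow.
    rewrite Rpower_pow by lra.
    assert (u ^ (n + b) <= Rpower u (INR n + a) + 1).
    { destruct (Rle_dec 1 u).
      - rewrite <- Rpower_pow by lra. pose proof (Rpower_pos u (INR n + a)).
        assert (Rpower u (INR (n + b)) <= Rpower u (INR n + a)).
        { apply Rle_Rpower; auto. rewrite plus_INR. lra. } lra.
      - pose proof (Rpower_pos u (INR n + a)).
        assert (Hp1 : u ^ (n + b) <= 1 ^ (n + b)) by (apply pow_incr; lra). rewrite pow1 in Hp1. lra. }
    nra.
  - destruct (II_le _ _ _ _ _ _ PW H2 H4) as [L1 L2].
    rewrite (Gamma_II _ _ _ H1). rewrite <- S2. simpl in S3. lra.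
Qed.

Lemma is_derive_RInt1 f w : cont0 f -> 0 < w -> is_derive (fun b => RInt f 1 b) w (f w).
Proof.
  intros Hc Hw. apply (is_derive_RInt f (fun b => RInt f 1 b) 1 w).
  - exists (mkposreal (w/2) ltac:(lra)). intros y Hy.
    unfold ball in Hy; simpl in Hy; unfold AbsRing_ball, abs, minus, plus, opp in Hy; simpl in Hy.
    apply Rabs_def2 in Hy. apply (@RInt_correct R_CompleteNormedModule). apply ex_RInt_c0; auto; lra.
  - apply Hc; auto.
Qed.

Lemma RInt_swap1 f w : cont0 f -> 0 < w -> RInt f 1 w = - RInt f w 1.
Proof. intros Hc Hw. rewrite <- (opp_RInt_swap f w 1). reflexivity. apply ex_RInt_c0; auto; lra. Qed.

Lemma limI_Rpower_neg p : 0 < p -> limI (fun r => Rpower r (- p)) 0.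
Proof.
  intros Hp eps He. exists (exp (- ln eps / p)). intros t Ht.
  assert (0 < t) by (pose proof (exp_pos (- ln eps / p)); lra).
  rewrite Rminus_0_r, Rabs_right by (left; apply Rpower_pos).
  unfold Rpower. rewrite <- (exp_ln eps) by auto. apply exp_increasing.
  apply ln_increasing in Ht; [|apply exp_pos]. rewrite ln_exp in Ht.
  apply (Rmult_lt_compat_l p) in Ht; auto. unfold Rdiv in Ht.
  replace (p * (- ln eps * / p)) with (- ln eps) in Ht by (field; lra). lra.
Qed.

Lemma isd (f g : R -> R) x l l' : (forall t, f t = g t) -> is_derive g x l -> l = l' -> is_derive f x l'.
Proof. intros He Hd Hl. subst l'. apply (is_derive_ext g f); auto. Qed.

Definition tl (v X A0 B0 : R) := fun r => (B0 - RInt (gam v) 1 (X / r)) / (A0 + B0).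

Lemma tail_bounds v A0 B0 w : II (gam v) A0 B0 -> 0 < w ->
  0 <= B0 - RInt (gam v) 1 w <= A0 + B0.
Proof.
  intros H Hw. destruct (II_nonneg_bounds (gam v) A0 B0) as [H1 H2]; auto.
  intros; left; apply gam_pos; auto.
  destruct (Rle_dec 1 w).
  - specialize (H2 w r). pose proof (H1 1 ltac:(lra)). lra.
  - rewrite RInt_swap1 by (auto; apply cont0_gam). specialize (H1 w ltac:(lra)). pose proof (H2 1 ltac:(lra)). lra.
Qed.

Lemma tl_bounds v X A0 B0 r : II (gam v) A0 B0 -> 0 < A0 + B0 -> 0 < X -> 0 < r -> 0 <= tl v X A0 B0 r <= 1.
Proof.
  intros H HG HX Hr. unfold tl. pose proof (tail_bounds v A0 B0 (X / r) H ltac:(apply Rdiv_lt_0_compat; auto)).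
  split. apply Rmult_le_pos. lra. left; apply Rinv_0_lt_compat; auto.
  apply (Rmult_le_reg_r (A0 + B0)); auto. unfold Rdiv. rewrite Rmult_assoc, Rinv_l; lra.
Qed.

Lemma is_derive_tl v X A0 B0 r : 0 < A0 + B0 -> 0 < X -> 0 < r ->
  is_derive (tl v X A0 B0) r (gam v (X / r) * X / ((A0 + B0) * r ^ 2)).
Proof.
  intros HG HX Hr. unfold tl.
  assert (Hw : 0 < X / r) by (apply Rdiv_lt_0_compat; auto).
  assert (D1 : is_derive (fun r0 => RInt (gam v) 1 (X / r0)) r (scal (- X / r ^ 2) (gam v (X / r)))).
  { apply (is_derive_comp (fun b => RInt (gam v) 1 b) (fun r0 => X / r0)).
    apply is_derive_RInt1; auto. apply cont0_gam.
    auto_derive. lra. field. lra. }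
  assert (D2 := is_derive_scal _ _ (/ (A0 + B0)) _ (is_derive_minus _ _ r _ _ (is_derive_const B0 r) D1)).
  eapply (isd _ _ _ _ _ _ D2).
  Unshelve. 2:{ intro t. simpl. unfold minus, plus, opp; simpl. unfold Rdiv. ring. }
  unfold minus, plus, opp, zero, scal; simpl; unfold mult; simpl. field. split; lra.
Qed.

Lemma limI_minus_const F B c : limI F B -> limI (fun t => c - F t) (c - B).
Proof.
  intro H. pose proof (limI_plus _ _ _ _ (limI_const c) (limI_scal _ _ (-1) H)) as H'.
  replace (c - B) with (c + -1 * B) by ring. apply (limI_ext (fun t => c + -1 * F t) _ _ 0); [intros; ring|exact H'].
Qed.

Lemma lim0_minus_const F B c : lim0 F B -> lim0 (fun t => c - F t) (c - B).
Proof.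
  intro H. pose proof (lim0_plus _ _ _ _ (lim0_const c) (lim0_scal _ _ (-1) H)) as H'.
  replace (c - B) with (c + -1 * B) by ring. apply (lim0_ext (fun t => c + -1 * F t) _ _ 1); [lra|intros; ring|exact H'].
Qed.

Lemma limI_sub_const F B c : limI F B -> limI (fun t => F t - c) (B - c).
Proof.
  intro H. pose proof (limI_plus _ _ _ _ H (limI_const (-c))) as H'.
  apply (limI_ext (fun t => F t + - c) _ _ 0); [intros; ring|exact H'].
Qed.

Lemma lim0_sub_const F B c : lim0 F B -> lim0 (fun t => F t - c) (B - c).
Proof.
  intro H. pose proof (lim0_plus _ _ _ _ H (lim0_const (-c))) as H'.
  apply (lim0_ext (fun t => F t + - c) _ _ 1); [lra|intros; ring|exact H'].
Qed.

Lemma tail_decay v p A0 B0 Ak Bk : 0 < v -> 0 < p -> II (gam v) A0 B0 -> II (gam (v + p)) Ak Bk ->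
  limI (fun w => Rpower w p * (B0 - RInt (gam v) 1 w)) 0.
Proof.
  intros Hv Hp H0 Hk.
  pose proof H0 as [Hc0 [HA0 HB0]]. pose proof Hk as [Hck [HAk HBk]].
  apply (limI_squeeze (fun _ => 0) _ (fun w => Bk - RInt (gam (v + p)) 1 w) _ 1).
  - intros w Hw. split.
    + apply Rmult_le_pos. left; apply Rpower_pos. apply (tail_bounds v A0 B0 w H0); lra.
    + apply (limI_le (fun t => Rpower w p * (RInt (gam v) 1 t - RInt (gam v) 1 w))
                     (fun t => RInt (gam (v + p)) 1 t - RInt (gam (v + p)) 1 w) _ _ w).
      * intros t Ht.
        rewrite (RInt_split' (gam v) 1 w t), (RInt_split' (gam (v+p)) 1 w t) by (auto; lra).
        rewrite !Rplus_minus_l.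

        change (Rpower w p * RInt (gam v) w t) with (scal (Rpower w p) (RInt (gam v) w t)).
        rewrite <- (RInt_scal (gam v) w t (Rpower w p)) by (apply ex_RInt_c0; auto; lra).
        apply RInt_le; try lra.
        -- apply (ex_RInt_ext (fun u => Rpower w p * gam v u)). intros; reflexivity.
           apply ex_RInt_c0; try lra. intros x Hx. apply (continuous_mult (fun _ => Rpower w p) (gam v)).
           apply continuous_const. apply cont0_gam; auto.
        -- apply ex_RInt_c0; auto; lra.
        -- intros u Hu. unfold scal; simpl; unfold mult; simpl. unfold gam.
           replace (v + p - 1) with ((v - 1) + p) by ring. rewrite Rpower_plus.
           pose proof (Rpower_pos u (v-1)). pose proof (exp_pos (-u)).
           assert (Rpower w p <= Rpower u p) by (apply Rle_Rpower_l; lra).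
           replace (Rpower u (v - 1) * Rpower u p * exp (- u)) with (Rpower u p * (Rpower u (v - 1) * exp (- u))) by ring.
           apply Rmult_le_compat_r; [|lra]. left; apply Rmult_lt_0_compat; auto.
      * apply limI_scal. apply limI_sub_const; auto.
      * apply limI_sub_const; auto.
  - apply limI_const.
  - replace 0 with (Bk - Bk) by ring. apply limI_minus_const; auto.
Qed.

Lemma Rpower_div_id X r v p : 0 < X -> 0 < r ->
  Rpower (X / r) (v - 1) * Rpower r (- p) = Rpower X (- p) * Rpower (X / r) (v + p - 1).
Proof.
  intros HX Hr. unfold Rpower.
  rewrite <- !exp_plus. f_equal. unfold Rdiv. rewrite ln_mult, ln_Rinv by (auto; apply Rinv_0_lt_compat; auto). ring.
Qed.

Lemma Rpower_shift r p : 0 < r -> Rpower r (- p) = r * Rpower r (- p - 1).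
Proof.
  intros Hr. replace (- p) with (1 + (- p - 1)) at 1 by ring. rewrite Rpower_plus, Rpower_1; auto.
Qed.

Lemma cont0_tl v X A0 B0 : 0 < A0 + B0 -> 0 < X -> cont0 (tl v X A0 B0).
Proof. intros HG HX x Hx. apply exd_cont. eexists. apply is_derive_tl; auto. Qed.

Lemma J_II v X A0 B0 p Ak Bk : 0 < v -> 0 < X -> 0 < p -> II (gam v) A0 B0 -> 0 < A0 + B0 ->
  II (gam (v + p)) Ak Bk ->
  exists A B, II (fun r => tl v X A0 B0 r * Rpower r (- p - 1)) A B /\
    A + B = Rpower X (- p) * (Ak + Bk) / (p * (A0 + B0)).
Proof.
  intros Hv HX Hp H0 HG Hk.
  set (G := A0 + B0) in *.
  set (c := Rpower X (- p) / (p * G)).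
  set (Phi := fun r => - (tl v X A0 B0 r * Rpower r (- p)) / p - c * RInt (gam (v + p)) 1 (X / r)).
  assert (Hcf : cont0 (fun r => tl v X A0 B0 r * Rpower r (- p - 1))).
  { intros x Hx. apply (continuous_mult (tl v X A0 B0) (fun r => Rpower r (-p-1))).
    apply cont0_tl; auto. apply cont_Rpower; auto. }
  assert (HD : forall r, 0 < r -> is_derive Phi r (tl v X A0 B0 r * Rpower r (- p - 1))).
  { intros r Hr.
    assert (Hw : 0 < X / r) by (apply Rdiv_lt_0_compat; auto).
    assert (D1 : is_derive (fun r0 => RInt (gam (v + p)) 1 (X / r0)) r (scal (- X / r ^ 2) (gam (v + p) (X / r)))).
    { apply (is_derive_comp (fun b => RInt (gam (v + p)) 1 b) (fun r0 => X / r0)).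
      apply is_derive_RInt1; auto. apply cont0_gam.
      auto_derive. lra. field. lra. }
    assert (D2 := is_derive_mult _ _ _ _ _ (is_derive_tl v X A0 B0 r HG HX Hr) (is_derive_Rpower r (-p) Hr) Rmult_comm).
    assert (D3 := is_derive_plus _ _ _ _ _ (is_derive_scal _ _ (- / p) _ D2) (is_derive_scal _ _ (- c) _ D1)).
    eapply (isd _ _ _ _ _ _ D3).
    Unshelve. 2:{ intro t. unfold Phi. simpl. unfold plus, mult; simpl. unfold Rdiv. ring. }
    unfold plus, mult, scal; simpl; unfold mult; simpl.
    assert (E1 := Rpower_div_id X r v p HX Hr).
    assert (E2 := Rpower_shift r p Hr).
    unfold gam. unfold c. rewrite E2.
    replace (Rpower (X / r) (v + p - 1)) with (Rpower (X / r) (v - 1) * Rpower r (- p) / Rpower X (- p)).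
    2:{ rewrite E1. field. apply Rgt_not_eq, Rpower_pos. }
    rewrite E2. unfold G in *. field; repeat split; try lra; try (apply Rgt_not_eq, Rpower_pos). }
  pose proof Hk as [Hck [HAk HBk]].
  assert (HT : forall r, 0 < r -> tl v X A0 B0 r * Rpower r (- p) =
     Rpower X (- p) / G * (Rpower (X / r) p * (B0 - RInt (gam v) 1 (X / r)))).
  { intros r Hr. assert (E := Rpower_div_id X r 1 p HX Hr).
    replace (1 - 1) with 0 in E by ring. replace (1 + p - 1) with p in E by ring.
    rewrite Rpower_O in E by (apply Rdiv_lt_0_compat; auto). rewrite Rmult_1_l in E.
    rewrite E. unfold tl. fold G. field. lra. }
  assert (L0T : lim0 (fun r => tl v X A0 B0 r * Rpower r (- p)) 0).
  { apply (lim0_ext (fun r => Rpower X (- p) / G * (Rpower (X / r) p * (B0 - RInt (gam v) 1 (X / r)))) _ _ 1); [lra| |].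
    intros; rewrite HT; auto; lra.
    replace 0 with (Rpower X (- p) / G * 0) by ring. apply lim0_scal.
    apply (lim0_of_limI (fun w => Rpower w p * (B0 - RInt (gam v) 1 w))); auto.
    apply (tail_decay v p A0 B0 Ak Bk); auto. }
  assert (L0R : lim0 (fun r => RInt (gam (v + p)) 1 (X / r)) Bk).
  { apply (lim0_of_limI (fun w => RInt (gam (v + p)) 1 w)); auto. }
  assert (LIT : limI (fun r => tl v X A0 B0 r * Rpower r (- p)) 0).
  { apply (limI_squeeze (fun _ => 0) _ (fun r => Rpower r (- p)) _ 0).
    intros r Hr. pose proof (tl_bounds v X A0 B0 r H0 HG HX Hr). pose proof (Rpower_pos r (-p)). split; nra.
    apply limI_const. apply limI_Rpower_neg; auto. }
  assert (LIR : limI (fun r => RInt (gam (v + p)) 1 (X / r)) (- Ak)).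
  { apply (limI_of_lim0 (fun w => RInt (gam (v + p)) 1 w)); auto.
    apply (lim0_ext (fun w => -1 * RInt (gam (v + p)) w 1) _ _ 1); [lra| |].
    intros w Hw. rewrite RInt_swap1; [ring| apply cont0_gam| lra].
    replace (- Ak) with (-1 * Ak) by ring. apply lim0_scal; auto. }
  assert (L0 : lim0 Phi (- c * Bk)).
  { apply (lim0_ext (fun r => - / p * (tl v X A0 B0 r * Rpower r (- p)) + - c * RInt (gam (v + p)) 1 (X / r)) _ _ 1); [lra| |].
    intros; unfold Phi; unfold Rdiv; ring.
    replace (- c * Bk) with (- / p * 0 + - c * Bk) by ring. apply lim0_plus; apply lim0_scal; auto. }
  assert (LI : limI Phi (c * Ak)).
  { apply (limI_ext (fun r => - / p * (tl v X A0 B0 r * Rpower r (- p)) + - c * RInt (gam (v + p)) 1 (X / r)) _ _ 1).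
    intros; unfold Phi; unfold Rdiv; ring.
    replace (c * Ak) with (- / p * 0 + - c * (- Ak)) by ring. apply limI_plus; apply limI_scal; auto. }
  pose proof (II_deriv _ Phi (- c * Bk) (c * Ak) Hcf HD L0 LI) as HII.
  exists (Phi 1 - - c * Bk), (c * Ak - Phi 1). split; auto.
  unfold c. field. split; lra.
Qed.

Lemma package x0 beta : 0 < x0 -> 0 <= beta < 1 ->
  exists A0 B0, II (gam (/ (2 * (1 - beta)))) A0 B0 /\ A0 + B0 = Gamma_fun (/ (2 * (1 - beta))) /\
   forall r, 0 < r -> tail_factor x0 beta r =
     tl (/ (2 * (1 - beta))) (Rpower x0 (2 * (1 - beta)) / (2 * (1 - beta) ^ 2)) A0 B0 r.
Proof.
  intros Hx Hb. set (v := / (2 * (1 - beta))).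
  assert (Hv : 0 < v) by (unfold v; apply Rinv_0_lt_compat; lra).
  destruct (gam_II v Hv) as [A0 [B0 H0]]. exists A0, B0.
  assert (HG : Gamma_fun v = A0 + B0) by (apply Gamma_II; auto).
  split; auto. split; auto. intros r Hr.
  unfold tail_factor, inc_Gamma. fold v.
  assert (HX : 0 < Rpower x0 (2 * (1 - beta)) / (2 * r * (1 - beta) ^ 2)).
  { apply Rdiv_lt_0_compat. apply Rpower_pos. apply Rmult_lt_0_compat. lra. apply pow_lt; lra. }
  change (fun u => Rpower u (v - 1) * exp (- u)) with (gam v).
  rewrite (II_to (gam v) A0 B0 _ H0 HX). rewrite HG. unfold tl.
  replace (Rpower x0 (2 * (1 - beta)) / (2 * (1 - beta) ^ 2) / r) with (Rpower x0 (2 * (1 - beta)) / (2 * r * (1 - beta) ^ 2)).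
  2:{ field. split; lra. }
  pose proof (Gamma_pos v Hv). rewrite HG in H. field. lra.
Qed.

Definition Vk (v X G : R) (k : nat) :=
  Rpower X (- (INR k + 1/2)) * Gamma_fun (v + (INR k + 1/2)) / ((INR k + 1/2) * G).

Lemma fk_II v X A0 B0 k : 0 < v -> 0 < X -> II (gam v) A0 B0 -> 0 < A0 + B0 ->
  exists A B, II (fun r => tl v X A0 B0 r * Rpower r (- (INR k + 1/2) - 1)) A B /\ A + B = Vk v X (A0 + B0) k.
Proof.
  intros Hv HX H0 HG. set (p := INR k + 1/2).
  assert (Hp : 0 < p) by (unfold p; pose proof (pos_INR k); lra).
  destruct (gam_II (v + p)) as [Ak [Bk Hk]]. lra.
  destruct (J_II v X A0 B0 p Ak Bk Hv HX Hp H0 HG Hk) as [A [B [H1 H2]]].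
  exists A, B. split; auto. rewrite H2. unfold Vk. fold p. rewrite (Gamma_II _ _ _ Hk). reflexivity.
Qed.

Lemma II_sum (f : nat -> R -> R) (V coef : nat -> R) n :
  (forall k, exists A B, II (f k) A B /\ A + B = V k) ->
  exists A B, II (fun r => sum_f_R0 (fun k => coef k * f k r) n) A B /\
    A + B = sum_f_R0 (fun k => coef k * V k) n.
Proof.
  intro Hf. induction n as [|n [A [B [H HS]]]].
  - destruct (Hf 0%nat) as [A [B [H HS]]]. exists (coef 0%nat * A), (coef 0%nat * B). simpl. split.
    apply (II_scal (f 0%nat) A B (coef 0%nat)); auto. rewrite <- HS. ring.
  - destruct (Hf (S n)) as [A' [B' [H' HS']]].
    exists (A + coef (S n) * A'), (B + coef (S n) * B'). simpl. split.
    apply (II_plus _ _ _ _ _ _ H (II_scal _ _ _ (coef (S n)) H')).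
    rewrite <- HS, <- HS'. ring.
Qed.

Lemma isd2 (f g : R -> R) (x l l' : R) : is_derive g x l -> (forall t, f t = g t) -> l = l' -> is_derive f x l'.
Proof. intros Hd He Hl. subst l'. apply (is_derive_ext g f); auto. Qed.

Definition TnE n x := sum_f_R0 (fun k => / INR (fact k) * (- x) ^ k) n.

Lemma dT n x : is_derive (TnE (S n)) x (- TnE n x).
Proof.
  induction n as [|n IH].
  - unfold TnE. simpl. auto_derive; auto. simpl. field.
  - assert (Hm0 : forall c m, is_derive (fun y => c * (- y) ^ S m) x (- (c * INR (S m) * (- x) ^ m))).
    { intros c m. auto_derive; auto. destruct m; simpl; ring. }
    assert (Hm : is_derive (fun y => / INR (fact (S (S n))) * (- y) ^ S (S n)) x
                   (- (/ INR (fact (S n)) * (- x) ^ S n))).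
    { apply (isd2 _ _ _ _ _ (Hm0 (/ INR (fact (S (S n)))) (S n))). intro t; reflexivity.
      rewrite (fact_simpl (S n)), mult_INR.
      pose proof (INR_fact_neq_0 (S n)). pose proof (pos_INR (S (S n))).
      field. repeat split; try (apply not_0_INR; lia); auto. }
    pose proof (is_derive_plus _ _ _ _ _ IH Hm) as H.
    apply (isd2 _ _ _ _ _ H). intro t. unfold TnE; simpl; unfold plus; simpl. reflexivity.
    unfold plus; simpl. unfold TnE; simpl. ring.
Qed.

Lemma Tn_0 n : TnE n 0 = 1.
Proof.
  induction n as [|n IH]. unfold TnE; simpl; field.
  unfold TnE in *. simpl. rewrite IH. rewrite Ropp_0. simpl. ring.
Qed.

Lemma exd_Tn n x : ex_derive (TnE n) x.
Proof.
  destruct n. unfold TnE; simpl. auto_derive. auto. eexists. apply dT.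
Qed.

Lemma taylor_expm n x : 0 <= x ->
  Rabs (exp (- x) - TnE n x) <= x ^ S n / INR (fact (S n)).
Proof.
  revert x. induction n as [|n IH]; intros x Hx.
  - unfold TnE; simpl. rewrite Rinv_1, !Rmult_1_l, Rmult_1_r, Rdiv_1_r.
    pose proof (exp_ineq1_le (- x)). pose proof (exp_neg_le1 x Hx).
    rewrite Rabs_left1 by lra. lra.
  - set (R := fun n y => exp (- y) - TnE n y).
    assert (HRd : forall y, is_derive (R (S n)) y (- R n y)).
    { intro y. unfold R. apply (isd2 _ _ _ _ _ (is_derive_minus _ _ _ _ _ (is_derive_comp exp (fun t => - t) y _ _ (is_derive_exp _) (is_derive_opp _ _ _ (is_derive_id y))) (dT n y))).
      intro t. reflexivity.
      unfold minus, plus, opp, scal, one; simpl; unfold mult; simpl. ring. }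
    assert (Hc : forall y, continuous (R n) y).
    { intro y. apply exd_cont. unfold R. apply (ex_derive_minus (fun t => exp (- t)) (TnE n)).
      auto_derive. auto. apply exd_Tn. }
    assert (E : RInt (fun y => - R n y) 0 x = R (S n) x).
    { apply is_RInt_unique. replace (R (S n) x) with (minus (R (S n) x) (R (S n) 0)).
      apply (is_RInt_derive (R (S n))). intros; apply HRd.
      intros y _. apply (continuous_opp (R n)). apply Hc.
      unfold minus, plus, opp; simpl. unfold R. rewrite Tn_0, Ropp_0, exp_0. ring. }
    assert (E2 : RInt (fun y => y ^ S n / INR (fact (S n))) 0 x = x ^ S (S n) / INR (fact (S (S n)))).
    { apply is_RInt_unique.
      replace (x ^ S (S n) / INR (fact (S (S n)))) with (minus (x ^ S (S n) / INR (fact (S (S n)))) (0 ^ S (S n) / INR (fact (S (S n))))) by (unfold minus, plus, opp; simpl; unfold Rdiv; ring).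
      apply (is_RInt_derive (fun y => y ^ S (S n) / INR (fact (S (S n))))).
      - intros y _.
        assert (Hm0 : forall c m, is_derive (fun y => y ^ S m * c) y (INR (S m) * y ^ m * c)).
        { intros c m. auto_derive; auto. destruct m; simpl; ring. }
        apply (isd2 _ _ _ _ _ (Hm0 (/ INR (fact (S (S n)))) (S n))). intro t; reflexivity.
        rewrite (fact_simpl (S n)), mult_INR.
        pose proof (INR_fact_neq_0 (S n)).
        field. repeat split; try (apply not_0_INR; lia); auto.
      - intros y _. apply exd_cont. auto_derive; try exact I; try apply INR_fact_neq_0. }
    fold (R (S n) x). rewrite <- E.
    assert (Hex1 : ex_RInt (fun y => - R n y) 0 x).
    { apply (@ex_RInt_continuous R_CompleteNormedModule). intros. apply (continuous_opp (R n)). apply Hc. }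
    assert (Hex2 : ex_RInt (fun y => y ^ S n / INR (fact (S n))) 0 x).
    { apply (@ex_RInt_continuous R_CompleteNormedModule). intros. apply exd_cont. auto_derive; try exact I; try apply INR_fact_neq_0. }
    assert (Hex3 : ex_RInt (fun y => - (y ^ S n / INR (fact (S n)))) 0 x).
    { apply (@ex_RInt_continuous R_CompleteNormedModule). intros. apply exd_cont. auto_derive; try exact I; try apply INR_fact_neq_0. }
    assert (L1 : RInt (fun y => - R n y) 0 x <= RInt (fun y => y ^ S n / INR (fact (S n))) 0 x).
    { apply RInt_le; auto. intros y Hy. specialize (IH y ltac:(lra)). fold (R n y) in IH.
      apply Rabs_le_between in IH. lra. }
    assert (L2 : RInt (fun y => - (y ^ S n / INR (fact (S n)))) 0 x <= RInt (fun y => - R n y) 0 x).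
    { apply RInt_le; auto. intros y Hy. specialize (IH y ltac:(lra)). fold (R n y) in IH.
      apply Rabs_le_between in IH. lra. }
    assert (Hneg : RInt (fun y => - (y ^ S n / INR (fact (S n)))) 0 x = - RInt (fun y => y ^ S n / INR (fact (S n))) 0 x) by exact (RInt_opp _ _ _ Hex2). rewrite Hneg in L2.
    rewrite E2 in L1, L2. apply Rabs_le. lra.
Qed.

Lemma Rpower_X_k X k : 0 < X -> Rpower X (- (INR k + 1/2)) = Rpower X (- (1/2)) * / X ^ k.
Proof.
  intro HX. replace (- (INR k + 1/2)) with (- (1/2) + - INR k) by ring.
  rewrite Rpower_plus, (Rpower_Ropp X (INR k)), Rpower_pow by auto. reflexivity.
Qed.

Lemma Rpower_r_k r k : 0 < r -> Rpower r (- (INR k + 1/2) - 1) = / Rpower r (3/2) * / r ^ k.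
Proof.
  intro Hr. replace (- (INR k + 1/2) - 1) with (- (3/2) + - INR k) by lra.
  rewrite Rpower_plus, !Rpower_Ropp, Rpower_pow by auto. reflexivity.
Qed.

Lemma zX_pow z X k : 0 < X -> z ^ k * Rpower X (- (INR k + 1/2)) = Rpower X (- (1/2)) * (z / X) ^ k.
Proof.
  intro HX. rewrite Rpower_X_k by auto. unfold Rdiv. rewrite Rpow_mult_distr, pow_inv. ring.
Qed.

Lemma q_eq x0 y0 nu beta : 0 < x0 -> 0 < nu -> beta < 1 ->
  q_param x0 y0 nu beta = (y0 ^ 2 / (2 * nu ^ 2)) / (Rpower x0 (2 * (1 - beta)) / (2 * (1 - beta) ^ 2)).
Proof.
  intros. unfold q_param. pose proof (Rpower_pos x0 (2 * (1 - beta))).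
  field. repeat split; try lra; apply pow_nonzero; lra.
Qed.

Lemma Bernoulli_ge q n : 1 <= q -> 1 + INR n * (q - 1) <= q ^ n.
Proof.
  intro Hq. induction n as [|n IH]. simpl. lra.
  rewrite S_INR. simpl. assert (1 <= q ^ n) by (apply pow_R1_Rle; auto).
  nra.
Qed.

Lemma II_le2 f g A B C D : II f A B -> II g C D -> (forall x, 0 < x -> f x <= g x) -> A <= C /\ B <= D.
Proof. intros; eapply II_le; eauto. Qed.

Lemma sum_scal_l c f n : sum_f_R0 (fun k => c * f k) n = c * sum_f_R0 f n.
Proof. induction n; simpl; [ring| rewrite IHn; ring]. Qed.

Definition vv beta := / (2 * (1 - beta)).
Definition XX x0 beta := Rpower x0 (2 * (1 - beta)) / (2 * (1 - beta) ^ 2).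
Definition zz y0 nu := y0 ^ 2 / (2 * nu ^ 2).
Definition cc y0 nu := y0 / (nu * sqrt (2 * PI)).

Lemma main_facts x0 y0 nu beta : 0 < x0 -> 0 < y0 -> 0 < nu -> 0 <= beta < 1 ->
  exists G Ie, 0 < G /\ G = Gamma_fun (vv beta) /\
  (forall n, P_inf_n x0 y0 nu beta n =
      cc y0 nu * sum_f_R0 (fun k => (- zz y0 nu) ^ k / INR (fact k) * Vk (vv beta) (XX x0 beta) G k) n) /\
  P_inf x0 y0 nu beta = cc y0 nu * Ie /\
  (forall n, Rabs (Ie - sum_f_R0 (fun k => (- zz y0 nu) ^ k / INR (fact k) * Vk (vv beta) (XX x0 beta) G k) n)
      <= zz y0 nu ^ S n / INR (fact (S n)) * Vk (vv beta) (XX x0 beta) G (S n)).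
Proof.
  intros Hx0 Hy0 Hnu Hb.
  destruct (package x0 beta Hx0 Hb) as [A0 [B0 [H0 [HG Htail]]]].
  fold (vv beta) in H0, HG, Htail. fold (XX x0 beta) in Htail.
  set (v := vv beta) in *. set (X := XX x0 beta) in *. set (z := zz y0 nu). set (c0 := cc y0 nu).
  assert (Hv : 0 < v) by (unfold v, vv; apply Rinv_0_lt_compat; lra).
  assert (HX : 0 < X) by (unfold X, XX; apply Rdiv_lt_0_compat; [apply Rpower_pos| apply Rmult_lt_0_compat; [lra|apply pow_lt; lra]]).
  assert (Hz : 0 < z) by (unfold z, zz; apply Rdiv_lt_0_compat; [apply pow_lt; lra| apply Rmult_lt_0_compat; [lra|apply pow_lt; lra]]).
  assert (Hsq : 0 < sqrt (2 * PI)) by (apply sqrt_lt_R0; pose proof PI_RGT_0; lra).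
  set (G := A0 + B0) in *.
  assert (HGp : 0 < G) by (rewrite HG; apply Gamma_pos; auto).
  set (fk := fun (k : nat) r => tl v X A0 B0 r * Rpower r (- (INR k + 1/2) - 1)).
  assert (HV : forall k, exists A B, II (fk k) A B /\ A + B = Vk v X G k).
  { intro k. apply fk_II; auto. }
  set (W := fun r => tl v X A0 B0 r * Rpower r (- (3/2))).
  assert (Hfk : forall k r, 0 < r -> fk k r = W r * (/ r) ^ k).
  { intros k r Hr. unfold fk, W. rewrite Rpower_r_k, Rpower_Ropp, pow_inv by auto. ring. }
  assert (HW : forall r, 0 < r -> 0 <= W r).
  { intros r Hr. unfold W. apply Rmult_le_pos. apply (tl_bounds v X A0 B0 r H0 HGp HX Hr). left; apply Rpower_pos. }
  exists G.
  set (e := fun r => W r * exp (- (z / r))).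
  assert (Hce : cont0 e).
  { intros r Hr. unfold e, W. apply (continuous_mult (fun r => tl v X A0 B0 r * Rpower r (- (3/2))) (fun r => exp (- (z / r)))).
    apply (continuous_mult (tl v X A0 B0) (fun r => Rpower r (- (3/2)))). apply cont0_tl; auto. apply cont_Rpower; auto.
    apply exd_cont. auto_derive. lra. }
  destruct (HV 0%nat) as [A1 [B1 [H1 S1]]].
  assert (Hle0 : forall r, 0 < r -> 0 <= e r <= fk 0%nat r).
  { intros r Hr. rewrite Hfk by auto. simpl. unfold e. pose proof (HW r Hr). pose proof (exp_pos (- (z / r))).
    pose proof (exp_neg_le1 (z / r) ltac:(left; apply Rdiv_lt_0_compat; auto)). split; nra. }
  destruct (II_nonneg_bounds (fk 0%nat) A1 B1) as [Bd1 Bd2]; auto.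
  { intros r Hr. rewrite Hfk by auto. pose proof (HW r Hr). pose proof (pow_le (/ r) 0 ltac:(left; apply Rinv_0_lt_compat; auto)). nra. }
  destruct (II_exists e (A1 + B1) Hce) as [Ae [Be He]].
  { intros; apply Hle0; auto. }
  { intros s Hs. apply Rle_trans with (RInt (fk 0%nat) s 1). apply RInt_le; try lra.
    apply ex_RInt_c0; auto; lra. apply ex_RInt_c0; try lra. apply H1.
    intros; apply Hle0; lra. specialize (Bd1 s Hs). specialize (Bd2 1 ltac:(lra)). lra. }
  { intros t Ht. apply Rle_trans with (RInt (fk 0%nat) 1 t). apply RInt_le; try lra.
    apply ex_RInt_c0; auto; lra. apply ex_RInt_c0; try lra. apply H1.
    intros; apply Hle0; lra. specialize (Bd2 t Ht). specialize (Bd1 1 ltac:(lra)). lra. }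
  exists (Ae + Be).
  split; auto. split; auto. split; [|split].
  -
    intro n.
    destruct (II_sum fk (Vk v X G) (fun k => c0 * ((- z) ^ k / INR (fact k))) n HV) as [A [B [H HS]]].
    unfold P_inf_n. rewrite (II_Int _ A B).
    + rewrite HS. rewrite <- sum_scal_l. apply sum_eq. intros k _. ring.
    + eapply II_ext; [|exact H]. intros r Hr. rewrite Htail by auto.
      rewrite <- sum_scal_l. apply sum_eq. intros k _. rewrite Hfk by auto.
      unfold W. rewrite Rpower_Ropp. unfold c0, cc, z, zz.
      replace (- (y0 ^ 2 / (2 * nu ^ 2 * r))) with (- (y0 ^ 2 / (2 * nu ^ 2)) * / r) by (field; split; lra).
      rewrite Rpow_mult_distr. pose proof (Rpower_pos r (3/2)). pose proof (INR_fact_neq_0 k).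
      field. repeat split; try lra.
  - unfold P_inf. rewrite (II_Int _ Ae Be). reflexivity.
    eapply II_ext; [|exact He]. intros r Hr. rewrite Htail by auto. unfold e, W.
    replace (y0 ^ 2 / (2 * nu ^ 2 * r)) with (z / r) by (unfold z, zz; field; split; lra). reflexivity.
  - intro n.
    destruct (II_sum fk (Vk v X G) (fun k => (- z) ^ k / INR (fact k)) n HV) as [A [B [H HS]]].
    destruct (HV (S n)) as [A2 [B2 [H2 S2]]].
    set (K := z ^ S n / INR (fact (S n))).
    assert (HSr : forall r, 0 < r -> sum_f_R0 (fun k => (- z) ^ k / INR (fact k) * fk k r) n = W r * TnE n (z / r)).
    { intros r Hr. unfold TnE. rewrite <- sum_scal_l. apply sum_eq. intros k _. rewrite Hfk by auto.
      replace (- (z / r)) with (- z * / r) by (field; lra). rewrite Rpow_mult_distr.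
      pose proof (INR_fact_neq_0 k). field. auto. }
    assert (HKr : forall r, 0 < r -> K * fk (S n) r = W r * ((z / r) ^ S n / INR (fact (S n)))).
    { intros r Hr. rewrite Hfk by auto. unfold K. unfold Rdiv. rewrite Rpow_mult_distr. ring. }
    assert (Tay : forall r, 0 < r -> Rabs (e r - W r * TnE n (z / r)) <= W r * ((z / r) ^ S n / INR (fact (S n)))).
    { intros r Hr. unfold e. replace (W r * exp (- (z / r)) - W r * TnE n (z / r)) with (W r * (exp (- (z / r)) - TnE n (z / r))) by ring.
      rewrite Rabs_mult, (Rabs_right (W r)) by (apply Rle_ge, HW; auto). apply Rmult_le_compat_l. apply HW; auto.
      apply taylor_expm. left; apply Rdiv_lt_0_compat; auto. }
    pose proof (II_plus _ _ _ _ _ _ H (II_scal _ _ _ K H2)) as Hup.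
    pose proof (II_plus _ _ _ _ _ _ H (II_scal _ _ _ (- K) H2)) as Hdn.
    destruct (II_le2 _ _ _ _ _ _ He Hup) as [U1 U2].
    { intros r Hr. cbv beta. rewrite HSr, HKr by auto. specialize (Tay r Hr). apply Rabs_le_between in Tay. lra. }
    destruct (II_le2 _ _ _ _ _ _ Hdn He) as [D1 D2].
    { intros r Hr. cbv beta. rewrite HSr by auto. replace (- K * fk (S n) r) with (- (K * fk (S n) r)) by ring.
      rewrite HKr by auto. specialize (Tay r Hr). apply Rabs_le_between in Tay. lra. }
    rewrite <- HS. rewrite <- S2. fold K. apply Rabs_le. split; lra.
Qed.

Lemma term_formula v X G a z k : 0 < X -> v + (INR k + 1/2) = INR k + 1 + a ->
  z ^ k / INR (fact k) * Vk v X G k =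
  Rpower X (- (1/2)) * (z / X) ^ k * Gamma_fun (INR k + 1 + a) / (INR (fact k) * (INR k + 1/2) * G).
Proof.
  intros HX Hva. unfold Vk. rewrite Hva.
  rewrite <- (zX_pow z X k HX). unfold Rdiv. rewrite !Rinv_mult. ring.
Qed.

Lemma Rpower_m1 n a : 0 < n -> Rpower n (-1 + a) = Rpower n a / n.
Proof. intro. replace (-1 + a) with (- (1) + a) by ring. rewrite Rpower_plus, Rpower_Ropp, Rpower_1 by auto. unfold Rdiv. ring. Qed.

Lemma exp_q n q : 0 < q -> exp (- (INR n * ln (/ q))) = q ^ n.
Proof.
  intro. rewrite ln_Rinv by auto. rewrite <- Rpower_pow by auto. unfold Rpower. f_equal. ring.
Qed.

Lemma va_eq beta k : beta < 1 -> vv beta + (INR k + 1/2) = INR k + 1 + beta / (2 - 2 * beta).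
Proof. intro. unfold vv. field. lra. Qed.

Theorem theorem2p5 (x0 y0 nu beta : R)
  (hx0 : 0 < x0) (hy0 : 0 < y0) (hnu : 0 < nu) (hb0 : 0 <= beta) (hb1 : beta < 1) :
  let q := q_param x0 y0 nu beta in
  ((1 < q \/ (q = 1 /\ 2 / 3 <= beta)) ->
     ~ (exists l : R, Un_cv (P_inf_n x0 y0 nu beta) l)) /\
  ((q < 1 \/ (q = 1 /\ beta < 2 / 3)) ->
     exists (C : R) (N : nat), (1 <= N)%nat /\
       forall n : nat, (N <= n)%nat ->
         Rabs (P_inf x0 y0 nu beta - P_inf_n x0 y0 nu beta n)
           <= C * (Rpower (INR n) (-1 + beta / (2 - 2 * beta))
                   * exp (- (INR n * ln (/ q))))).
Proof.
  intros q.
  destruct (main_facts x0 y0 nu beta hx0 hy0 hnu (conj hb0 hb1)) as [G [Ie [HGp [HG [HPn [HPi HT]]]]]].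
  set (v := vv beta) in *. set (X := XX x0 beta) in *. set (z := zz y0 nu) in *. set (c0 := cc y0 nu) in *.
  set (a := beta / (2 - 2 * beta)).
  assert (Ha : 0 <= a) by (unfold a; apply Rmult_le_pos; [lra| left; apply Rinv_0_lt_compat; lra]).
  assert (HX : 0 < X) by (unfold X, XX; apply Rdiv_lt_0_compat; [apply Rpower_pos| apply Rmult_lt_0_compat; [lra|apply pow_lt; lra]]).
  assert (Hz : 0 < z) by (unfold z, zz; apply Rdiv_lt_0_compat; [apply pow_lt; lra| apply Rmult_lt_0_compat; [lra|apply pow_lt; lra]]).
  assert (Hsq : 0 < sqrt (2 * PI)) by (apply sqrt_lt_R0; pose proof PI_RGT_0; lra).
  assert (Hc0 : 0 < c0) by (unfold c0, cc; apply Rdiv_lt_0_compat; [lra| apply Rmult_lt_0_compat; lra]).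
  assert (Hq : q = z / X) by (unfold q; rewrite q_eq by (auto; lra); reflexivity).
  assert (Hqp : 0 < q) by (rewrite Hq; apply Rdiv_lt_0_compat; auto).
  clearbody q.
  assert (HXh : 0 < Rpower X (- (1/2))) by apply Rpower_pos.
  assert (Hterm : forall k, z ^ k / INR (fact k) * Vk v X G k =
      Rpower X (- (1/2)) * q ^ k * Gamma_fun (INR k + 1 + a) / (INR (fact k) * (INR k + 1/2) * G)).
  { intro k. rewrite Hq. apply term_formula; auto. apply va_eq; auto. }
  assert (HGam : forall k, 0 < Gamma_fun (INR k + 1 + a)).
  { intro k. apply Gamma_pos. pose proof (pos_INR k). lra. }
  split.
  - intros Hcase [l Hl].
    set (K0 := Rpower X (- (1/2)) / G).
    assert (HK0 : 0 < K0) by (unfold K0; apply Rdiv_lt_0_compat; auto).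
    assert (Hlow : exists kap, 0 < kap /\ forall m, (1 <= m)%nat ->
              kap <= z ^ S m / INR (fact (S m)) * Vk v X G (S m)).
    { destruct Hcase as [Hq1 | [Hq1 Hb23]].
      - exists (K0 * Rmin 1 (q - 1) / 2). split.
        { apply Rdiv_lt_0_compat; [|lra]. apply Rmult_lt_0_compat; auto. apply Rmin_pos; lra. }
        intros m Hm. rewrite Hterm.
        set (mm := INR (S m)). set (f := INR (fact (S m))). set (g := Gamma_fun (mm + 1 + a)).
        assert (Hmm : 2 <= mm) by (unfold mm; rewrite S_INR; apply (le_INR 1) in Hm; simpl in Hm; lra).
        assert (Hf2 : 2 <= f).
        { unfold f. rewrite fact_simpl, mult_INR. fold mm. assert (1 <= INR (fact m)) by (apply (le_INR 1), lt_O_fact).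
          nra. }
        assert (Hg : f / 2 <= g).
        { pose proof (Gamma_lower (S m) a 0 ltac:(simpl; lra)) as HL. rewrite Nat.add_0_r in HL. fold f mm g in HL. lra. }
        assert (HB := Bernoulli_ge q (S m) ltac:(lra)). fold mm in HB.
        assert (Hmin : Rmin 1 (q - 1) * (mm + 1/2) <= 1 + mm * (q - 1)).
        { unfold Rmin. destruct Rle_dec; nra. }
        assert (Hmn : 0 < Rmin 1 (q - 1)) by (apply Rmin_pos; lra).
        assert (Hqm : 0 < q ^ S m) by (apply pow_lt; lra).
        unfold K0. 
        apply Rle_trans with (Rpower X (- (1/2)) * q ^ S m * (f / 2) / (f * (mm + 1/2) * G)).
        + replace (Rpower X (- (1/2)) * q ^ S m * (f / 2) / (f * (mm + 1/2) * G))
            with ((Rpower X (- (1/2)) / G / 2) * (q ^ S m / (mm + 1/2))) by (field; repeat split; lra).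
          replace (Rpower X (- (1/2)) / G * Rmin 1 (q - 1) / 2) with ((Rpower X (- (1/2)) / G / 2) * Rmin 1 (q - 1)) by (field; lra).
          apply Rmult_le_compat_l. fold K0; lra.
          apply (Rmult_le_reg_r (mm + 1/2)); [lra|]. unfold Rdiv. rewrite Rmult_assoc, Rinv_l, Rmult_1_r by lra. lra.
        + unfold Rdiv. apply Rmult_le_compat_r. left; apply Rinv_0_lt_compat; repeat apply Rmult_lt_0_compat; lra.
          apply Rmult_le_compat_l; [|lra]. left; apply Rmult_lt_0_compat; auto.
      - assert (Ha1 : 1 <= a) by (unfold a; apply (Rmult_le_reg_r (2 - 2 * beta)); [lra|]; unfold Rdiv; rewrite Rmult_assoc, Rinv_l; lra).
        exists (K0 / 2). split; [lra|].
        intros m Hm. rewrite Hterm. rewrite Hq1, pow1.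
        set (mm := INR (S m)). set (f := INR (fact (S m))). set (g := Gamma_fun (mm + 1 + a)).
        assert (Hmm : 2 <= mm) by (unfold mm; rewrite S_INR; apply (le_INR 1) in Hm; simpl in Hm; lra).
        assert (Hf1 : 1 <= f) by (apply (le_INR 1), lt_O_fact).
        assert (Hg : (mm + 1) * f / 2 <= g).
        { pose proof (Gamma_lower (S m) a 1 ltac:(simpl; lra)) as HL.
          replace (S m + 1)%nat with (S (S m)) in HL by lia. rewrite fact_simpl, mult_INR in HL.
          rewrite (S_INR (S m)) in HL. fold f mm g in HL. nra. }
        unfold K0.
        apply Rle_trans with (Rpower X (- (1/2)) * 1 * ((mm + 1) * f / 2) / (f * (mm + 1/2) * G)).
        + replace (Rpower X (- (1/2)) * 1 * ((mm + 1) * f / 2) / (f * (mm + 1/2) * G))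
            with ((Rpower X (- (1/2)) / G / 2) * ((mm + 1) / (mm + 1/2))) by (field; repeat split; lra).
          replace (Rpower X (- (1/2)) / G / 2) with ((Rpower X (- (1/2)) / G / 2) * 1) at 1 by ring.
          apply Rmult_le_compat_l. fold K0; lra.
          apply (Rmult_le_reg_r (mm + 1/2)); [lra|]. unfold Rdiv. rewrite Rmult_assoc, Rinv_l, Rmult_1_r by lra. lra.
        + unfold Rdiv. apply Rmult_le_compat_r. left; apply Rinv_0_lt_compat; repeat apply Rmult_lt_0_compat; lra.
          apply Rmult_le_compat_l; lra. }
    destruct Hlow as [kap [Hkap Hlow]].
    destruct (Hl (c0 * kap / 2)) as [N HN]. apply Rdiv_lt_0_compat; [apply Rmult_lt_0_compat|]; lra.
    specialize (Hlow (S N) ltac:(lia)).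
    pose proof (HN (S (S N)) ltac:(lia)) as H1. pose proof (HN (S N) ltac:(lia)) as H2.
    unfold R_dist in H1, H2. rewrite !HPn in H1, H2. rewrite tech5 in H1.
    set (S0 := sum_f_R0 (fun k => (- z) ^ k / INR (fact k) * Vk v X G k) (S N)) in *.
    set (tk := (- z) ^ S (S N) / INR (fact (S (S N))) * Vk v X G (S (S N))) in *.
    assert (Hpos : 0 < z ^ S (S N) / INR (fact (S (S N))) * Vk v X G (S (S N))).
    { rewrite Hterm. pose proof (pos_INR (S (S N))). pose proof (lt_0_INR _ (lt_O_fact (S (S N)))).
      apply Rdiv_lt_0_compat; repeat (apply Rmult_lt_0_compat || apply pow_lt); auto; lra. }
    assert (Htk : Rabs tk = z ^ S (S N) / INR (fact (S (S N))) * Vk v X G (S (S N))).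
    { unfold tk. replace (- z) with (-1 * z) by ring. rewrite Rpow_mult_distr.
      replace ((-1) ^ S (S N) * z ^ S (S N) / INR (fact (S (S N))) * Vk v X G (S (S N)))
        with ((-1) ^ S (S N) * (z ^ S (S N) / INR (fact (S (S N))) * Vk v X G (S (S N)))) by (unfold Rdiv; ring).
      rewrite Rabs_mult, pow_1_abs, Rmult_1_l, Rabs_right by lra. reflexivity. }
    assert (Habs : Rabs (c0 * tk) < c0 * kap).
    { replace (c0 * tk) with ((c0 * (S0 + tk) - l) - (c0 * S0 - l)) by ring.
      eapply Rle_lt_trans; [apply Rabs_triang|]. rewrite Rabs_Ropp. lra. }
    rewrite Rabs_mult, Rabs_right in Habs by lra. rewrite Htk in Habs.
    assert (c0 * kap <= c0 * (z ^ S (S N) / INR (fact (S (S N))) * Vk v X G (S (S N)))) by (apply Rmult_le_compat_l; lra).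
    lra.
  - intros _.
    destruct (exists_nat_ge a) as [J HJ].
    exists (c0 * Rpower X (- (1/2)) * (1 + 2 ^ J) * Rpower 2 a * q / G), (Nat.max 1 J).
    split; [lia|]. intros n Hn.
    assert (Hn1 : (1 <= n)%nat) by lia.
    assert (HnR : 1 <= INR n) by (apply (le_INR 1); auto).
    rewrite HPi, HPn. rewrite <- Rmult_minus_distr_l, Rabs_mult, Rabs_right by lra.
    specialize (HT n).
    assert (HT' : Rabs (Ie - sum_f_R0 (fun k => (- z) ^ k / INR (fact k) * Vk v X G k) n) <=
       Rpower X (- (1/2)) * q ^ S n * Gamma_fun (INR (S n) + 1 + a) / (INR (fact (S n)) * (INR (S n) + 1/2) * G)).
    { rewrite <- Hterm. exact HT. }
    assert (HU := Gamma_upper (S n) a J ltac:(lia) ltac:(lia) (conj Ha HJ)).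
    rewrite Rpower_m1, exp_q by lra.
    assert (Hpw : Rpower (INR (S n)) a <= Rpower 2 a * Rpower (INR n) a).
    { rewrite Rpower_mult_distr by lra. apply Rle_Rpower_l; auto. rewrite S_INR. split; lra. }
    set (g := Gamma_fun (INR (S n) + 1 + a)) in *.
    set (f := INR (fact (S n))) in *.
    assert (Hf : 0 < f) by (unfold f; apply lt_0_INR, lt_O_fact).
    pose proof (Rpower_pos (INR n) a). pose proof (Rpower_pos 2 a). pose proof (Rpower_pos (INR (S n)) a).
    assert (H2J : 0 < 1 + 2 ^ J) by (pose proof (pow_lt 2 J ltac:(lra)); lra).
    assert (Hqn : 0 < q ^ n) by (apply pow_lt; auto).
    rewrite S_INR in HT'. simpl (q ^ S n) in HT'.
    apply Rle_trans with (c0 * (Rpower X (- (1/2)) * (q * q ^ n) * g / (f * (INR n + 1 + 1/2) * G))).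
    { apply Rmult_le_compat_l; lra. }
    apply Rle_trans with (c0 * (Rpower X (- (1/2)) * (q * q ^ n) * (Rpower (INR (S n)) a * f * (1 + 2 ^ J)) / (f * (INR n + 1 + 1/2) * G))).
    { apply Rmult_le_compat_l; [lra|]. unfold Rdiv. apply Rmult_le_compat_r.
      left; apply Rinv_0_lt_compat. apply Rmult_lt_0_compat; [apply Rmult_lt_0_compat|]; lra.
      apply Rmult_le_compat_l; auto. left; apply Rmult_lt_0_compat; [|apply Rmult_lt_0_compat]; lra. }
    replace (c0 * (Rpower X (- (1/2)) * (q * q ^ n) * (Rpower (INR (S n)) a * f * (1 + 2 ^ J)) / (f * (INR n + 1 + 1/2) * G)))
      with ((c0 * Rpower X (- (1/2)) * (1 + 2 ^ J) * q / G) * q ^ n * (Rpower (INR (S n)) a / (INR n + 1 + 1/2)))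
      by (field; repeat split; lra).
    replace (c0 * Rpower X (- (1/2)) * (1 + 2 ^ J) * Rpower 2 a * q / G * (Rpower (INR n) a / INR n * q ^ n))
      with ((c0 * Rpower X (- (1/2)) * (1 + 2 ^ J) * q / G) * q ^ n * (Rpower 2 a * Rpower (INR n) a / INR n))
      by (field; repeat split; lra).
    assert (HK : 0 < c0 * Rpower X (- (1/2)) * (1 + 2 ^ J) * q / G).
    { apply Rdiv_lt_0_compat; [|exact HGp]. apply Rmult_lt_0_compat; [|exact Hqp]. apply Rmult_lt_0_compat; [|exact H2J]. apply Rmult_lt_0_compat; [exact Hc0|exact HXh]. }
    apply Rmult_le_compat_l. nra.
    apply Rle_trans with (Rpower (INR (S n)) a / INR n).
    { unfold Rdiv. apply Rmult_le_compat_l; [lra|]. apply Rinv_le_contravar; lra. }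
    unfold Rdiv. apply Rmult_le_compat_r; [left; apply Rinv_0_lt_compat; lra|]. auto.
Qed.
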